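(* Let $a>b>c>0$ and consider the ellipsoid $\mathcal{E}:\ \frac{x^2}{a^2}+\frac{y^2}{b^2}+\frac{z^2}{c^2}=1$. Consider the following curves in $\mathbb{R}^3$ ($t\in[0,2\pi)$): Ellipse 1: $(a\cos t,\, b\sin t,\, 0)$; Ellipse 2: $(a\cos t,\,0,\,c\sin t)$; Ellipse 3: $(0,\,b\cos t,\,c\sin t)$; Astroida 4: $\left(\frac{a^2-b^2}{a}\cos^3 t,\,\frac{a^2-b^2}{b}\sin^3 t,\,0\right)$; Astroida 5: $\left(\frac{a^2-c^2}{a}\cos^3 t,\,0,\,\frac{a^2-c^2}{c}\sin^3 t\right)$; Astroida 6: $\left(0,\,\frac{b^2-c^2}{b}\cos^3 t,\,\frac{b^2-c^2}{c}\sin^3 t\right)$; Ellipse 7: $\left(\frac{a^2-c^2}{a}\cos t,\,\frac{b^2-c^2}{b}\sin t,\,0\right)$; Ellipse 8: $\left(\frac{a^2-b^2}{a}\cos t,\,0,\,\frac{b^2-c^2}{c}\sin t\right)$; Ellipse 9: $\left(0,\,\frac{a^2-b^2}{b}\cos t,\,\frac{a^2-c^2}{c}\sin t\right)$. In what follows, ''$(\pm u,\pm v)$-type points'' means all four sign combinations. Then: (1) If $a^2\ge 2b^2$, Ellipse 1 and Astroida 4 intersect at the points $(\pm x_0,\pm y_0,0)$, where $x_0=\sqrt{\frac{a^4(a^2-2b^2)^3}{(a^2-b^2)(a^2+b^2)^3}}$, $y_0=\sqrt{\frac{b^4(2a^2-b^2)^3}{(a^2-b^2)(a^2+b^2)^3}}$.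 (2) If $a^2\ge 2c^2$, Ellipse 2 and Astroida 5 intersect at $(\pm x_1,0,\pm z_1)$, where $x_1=\sqrt{\frac{a^4(a^2-2c^2)^3}{(a^2-c^2)(a^2+c^2)^3}}$, $z_1=\sqrt{\frac{c^4(2a^2-c^2)^3}{(a^2-c^2)(a^2+c^2)^3}}$. (3) If $b^2\ge 2c^2$, Ellipse 3 and Astroida 6 intersect at $(0,\pm y_2,\pm z_2)$, where $y_2=\sqrt{\frac{b^4(b^2-2c^2)^3}{(b^2-c^2)(b^2+c^2)^3}}$, $z_2=\sqrt{\frac{c^4(2b^2-c^2)^3}{(b^2-c^2)(b^2+c^2)^3}}$. (4) Ellipse 1 and Ellipse 7 have no real intersection points; the (complex) common points of the conics $\frac{x^2}{a^2}+\frac{y^2}{b^2}=1$ and $\frac{a^2x^2}{(a^2-c^2)^2}+\frac{b^2y^2}{(b^2-c^2)^2}=1$ in the plane $z=0$ are $(\pm x^*,\pm y^*,0)$, where $(x^* )^2=\frac{a^2(a^2-c^2)^2(2b^2-c^2)}{(a^2-b^2)(2a^2b^2-a^2c^2-b^2c^2)}$ and $(y^* )^2=\frac{b^2(b^2-c^2)^2(2a^2-c^2)}{(b^2-a^2)(2a^2b^2-b^2c^2-a^2c^2)}$ (the latter being negative). (5) If $b^2\ge 2c^2$, Ellipse 2 and Ellipse 8 intersect at $(\pm x_3,0,\pm z_3)$, where $x_3=\sqrt{\frac{a^2(a^2-b^2)^2(2c^2-b^2)}{(a^2-c^2)(2a^2c^2-a^2b^2-b^2c^2)}}$, $z_3=\sqrt{\frac{c^2(c^2-b^2)^2(2a^2-b^2)}{(c^2-a^2)(2a^2c^2-a^2b^2-b^2c^2)}}$;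 moreover $x_1\ge x_3$ and $z_1\le z_3$, with equality when $\frac1{a^2}+\frac1{c^2}=\frac3{b^2}$. (6) If $2b^2\ge a^2\ge 2c^2$, Ellipse 3 and Ellipse 9 intersect at $(0,\pm y_4,\pm z_4)$, where $y_4=\sqrt{\frac{b^2(b^2-a^2)^2(2c^2-a^2)}{(b^2-c^2)(2b^2c^2-a^2b^2-a^2c^2)}}$, $z_4=\sqrt{\frac{c^2(c^2-a^2)^2(2b^2-a^2)}{(c^2-b^2)(2b^2c^2-a^2b^2-a^2c^2)}}$. In particular (when also $b^2\ge 2c^2$, so that $y_2,z_2$ are defined), $y_2\ge y_4$ and $z_2\le z_4$ if and only if $2b^4+2c^4-a^2b^2-a^2c^2-2b^2c^2\ge 0$. (7) If $a^2+c^2\ge 2b^2$, Astroida 4 and Ellipse 7 intersect at $(\pm x_5,\pm y_5,0)$, where $x_5=\sqrt{\frac{(a^2-c^2)^3(2b^2-a^2-c^2)^3}{a^2(b^2-a^2)(a^2+b^2-2c^2)^3}}$, $y_5=\sqrt{\frac{(b^2-c^2)^3(2a^2-b^2-c^2)^3}{b^2(a^2-b^2)(a^2+b^2-2c^2)^3}}$. (8) Astroida 5 and Ellipse 8 are tangent to each other at the points $(\pm x_6,0,\pm z_6)$, where $x_6=\sqrt{\frac{(a^2-b^2)^3}{a^2(a^2-c^2)}}$, $z_6=\sqrt{\frac{(b^2-c^2)^3}{c^2(a^2-c^2)}}$. These points divide Astroida 5 and Ellipse 8 into parts which belong to different sheets of the caustic of $\mathcal{E}$. These points lie on, inside, or outside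 $\mathcal{E}$ according as $\frac1{a^2}+\frac1{c^2}=\frac3{b^2}$, $<\frac3{b^2}$, or $>\frac3{b^2}$, respectively. (9) If $a^2+c^2\le 2b^2$, Astroida 6 and Ellipse 9 intersect at $(0,\pm y_7,\pm z_7)$, where $y_7=\sqrt{\frac{(b^2-a^2)^3(2c^2-b^2-a^2)^3}{b^2(c^2-b^2)(b^2+c^2-2a^2)^3}}$, $z_7=\sqrt{\frac{(c^2-a^2)^3(2b^2-c^2-a^2)^3}{c^2(b^2-c^2)(b^2+c^2-2a^2)^3}}$. These points lie on, inside, or outside $\mathcal{E}$ according as $2b^4+2c^4-a^2b^2-a^2c^2-2b^2c^2=0$, $<0$, or $>0$, respectively.
   Context: The caustic (focal surface, centro-surface) of $\mathcal{E}$ consists of two sheets: for each point $P$ of $\mathcal{E}$ with outer normal $\mathbf N=(x/a^2,y/b^2,z/c^2)$ and principal curvatures $k_1\le k_2$ (principal radii $R_i=1/k_i$), the centers of principal curvature are $C_i=P-R_i\,\mathbf N/|\mathbf N|$; the sheet formed by the points $C_1$ (greater radius) and the sheet formed by the points $C_2$ (smaller radius) are the two caustics. Equivalently, the caustic is the set of points $(X,Y,Z)$ for which there is $t$ with $\frac{a^2X^2}{(a^2+t)^2}+\frac{b^2Y^2}{(b^2+t)^2}+\frac{c^2Z^2}{(c^2+t)^2}=1$ and $\frac{a^2X^2}{(a^2+t)^3}+\frac{b^2Y^2}{(b^2+t)^3}+\frac{c^2Z^2}{(c^2+t)^3}=0$. The curves listed are the intersections of $\mathcal{E}$ and of its caustics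 with the coordinate planes. *)

(* Defs.v *)
From Stdlib Require Import Reals.
From Coquelicot Require Import Coquelicot.
Open Scope R_scope.

Definition pt := (R * R * R)%type.
Definition px (p : pt) : R := fst (fst p).
Definition py (p : pt) : R := snd (fst p).
Definition pz (p : pt) : R := snd p.

Definition ellipse1 (a b c t : R) : pt := (a * cos t, b * sin t, 0).
Definition ellipse2 (a b c t : R) : pt := (a * cos t, 0, c * sin t).
Definition ellipse3 (a b c t : R) : pt := (0, b * cos t, c * sin t).
Definition astroida4 (a b c t : R) : pt :=
  ((a^2 - b^2) / a * (cos t)^3, (a^2 - b^2) / b * (sin t)^3, 0).
Definition astroida5 (a b c t : R) : pt :=
  ((a^2 - c^2) / a * (cos t)^3, 0, (a^2 - c^2) / c * (sin t)^3).
Definition astroida6 (a b c t : R) : pt :=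
  (0, (b^2 - c^2) / b * (cos t)^3, (b^2 - c^2) / c * (sin t)^3).
Definition ellipse7 (a b c t : R) : pt :=
  ((a^2 - c^2) / a * cos t, (b^2 - c^2) / b * sin t, 0).
Definition ellipse8 (a b c t : R) : pt :=
  ((a^2 - b^2) / a * cos t, 0, (b^2 - c^2) / c * sin t).
Definition ellipse9 (a b c t : R) : pt :=
  (0, (a^2 - b^2) / b * cos t, (a^2 - c^2) / c * sin t).

Definition on_curve (f : R -> pt) (p : pt) : Prop :=
  exists t, 0 <= t < 2 * PI /\ f t = p.

Definition intersect_at (f g : R -> pt) (S : pt -> Prop) : Prop :=
  forall p, (on_curve f p /\ on_curve g p) <-> S p.

Definition pm (u x : R) : Prop := x = u \/ x = - u.
Definition pts_xy (u v : R) (p : pt) : Prop :=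
  pm u (px p) /\ pm v (py p) /\ pz p = 0.
Definition pts_xz (u v : R) (p : pt) : Prop :=
  pm u (px p) /\ py p = 0 /\ pm v (pz p).
Definition pts_yz (u v : R) (p : pt) : Prop :=
  px p = 0 /\ pm u (py p) /\ pm v (pz p).

Definition curve_deriv (f : R -> pt) (t : R) (d : pt) : Prop :=
  is_derive (fun s => px (f s)) t (px d) /\
  is_derive (fun s => py (f s)) t (py d) /\
  is_derive (fun s => pz (f s)) t (pz d).

Definition cross (u v : pt) : pt :=
  (py u * pz v - pz u * py v, pz u * px v - px u * pz v,
   px u * py v - py u * px v).

Definition zero_pt : pt := (0, 0, 0).

Definition tangent_at (f g : R -> pt) (p : pt) : Prop :=
  exists t s df dg,
    0 <= t < 2 * PI /\ 0 <= s < 2 * PI /\ f t = p /\ g s = p /\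
    curve_deriv f t df /\ curve_deriv g s dg /\
    df <> zero_pt /\ dg <> zero_pt /\ cross df dg = zero_pt.

Definition tangent_curves_at (f g : R -> pt) (S : pt -> Prop) : Prop :=
  intersect_at f g S /\ forall p, S p -> tangent_at f g p.

Definition ellF (a b c : R) (p : pt) : R :=
  (px p)^2 / a^2 + (py p)^2 / b^2 + (pz p)^2 / c^2.
Definition on_E (a b c : R) (p : pt) : Prop := ellF a b c p = 1.
Definition inside_E (a b c : R) (p : pt) : Prop := ellF a b c p < 1.
Definition outside_E (a b c : R) (p : pt) : Prop := ellF a b c p > 1.

Definition dot (u v : pt) : R := px u * px v + py u * py v + pz u * pz v.
Definition vnorm (u : pt) : R := sqrt (dot u u).
Definition vadd (u v : pt) : pt := (px u + px v, py u + py v, pz u + pz v).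
Definition vscale (k : R) (u : pt) : pt := (k * px u, k * py u, k * pz u).

Definition normalN (a b c : R) (p : pt) : pt :=
  (px p / a^2, py p / b^2, pz p / c^2).
(* (half) Hessian of the defining function: v |-> (vx/a^2, vy/b^2, vz/c^2) *)
Definition hessD (a b c : R) (v : pt) : pt :=
  (px v / a^2, py v / b^2, pz v / c^2).

(* k is a principal curvature of E at p: an eigenvalue of the shape operator
   v |-> (projection onto T_pE of D v) / |N| restricted to the tangent plane
   T_pE = N^perp (Weingarten map of the outer unit normal N/|N|). *)
Definition principal_curvature (a b c : R) (p : pt) (k : R) : Prop :=
  on_E a b c p /\
  exists v : pt, v <> zero_pt /\ dot v (normalN a b c p) = 0 /\
    exists mu : R,
      hessD a b c v = vadd (vscale (k * vnorm (normalN a b c p)) v)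
                           (vscale mu (normalN a b c p)).

Definition curv_center (a b c : R) (p : pt) (k : R) : pt :=
  vadd p (vscale (- (1 / k) / vnorm (normalN a b c p)) (normalN a b c p)).

Definition caustic_sheet1 (a b c : R) (q : pt) : Prop :=
  exists p k, principal_curvature a b c p k /\
    (forall k', principal_curvature a b c p k' -> k <= k') /\
    q = curv_center a b c p k.
Definition caustic_sheet2 (a b c : R) (q : pt) : Prop :=
  exists p k, principal_curvature a b c p k /\
    (forall k', principal_curvature a b c p k' -> k' <= k) /\
    q = curv_center a b c p k.

Definition x0 a b := sqrt (a^4 * (a^2 - 2*b^2)^3 / ((a^2 - b^2) * (a^2 + b^2)^3)).
Definition y0 a b := sqrt (b^4 * (2*a^2 - b^2)^3 / ((a^2 - b^2) * (a^2 + b^2)^3)).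
Definition x1 a c := sqrt (a^4 * (a^2 - 2*c^2)^3 / ((a^2 - c^2) * (a^2 + c^2)^3)).
Definition z1 a c := sqrt (c^4 * (2*a^2 - c^2)^3 / ((a^2 - c^2) * (a^2 + c^2)^3)).
Definition y2 b c := sqrt (b^4 * (b^2 - 2*c^2)^3 / ((b^2 - c^2) * (b^2 + c^2)^3)).
Definition z2 b c := sqrt (c^4 * (2*b^2 - c^2)^3 / ((b^2 - c^2) * (b^2 + c^2)^3)).
(* squares of the complex coordinates in (4) *)
Definition xstar2 a b c :=
  a^2 * (a^2 - c^2)^2 * (2*b^2 - c^2) / ((a^2 - b^2) * (2*a^2*b^2 - a^2*c^2 - b^2*c^2)).
Definition ystar2 a b c :=
  b^2 * (b^2 - c^2)^2 * (2*a^2 - c^2) / ((b^2 - a^2) * (2*a^2*b^2 - b^2*c^2 - a^2*c^2)).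
Definition x3 a b c := sqrt (a^2 * (a^2 - b^2)^2 * (2*c^2 - b^2)
                             / ((a^2 - c^2) * (2*a^2*c^2 - a^2*b^2 - b^2*c^2))).
Definition z3 a b c := sqrt (c^2 * (c^2 - b^2)^2 * (2*a^2 - b^2)
                             / ((c^2 - a^2) * (2*a^2*c^2 - a^2*b^2 - b^2*c^2))).
Definition y4 a b c := sqrt (b^2 * (b^2 - a^2)^2 * (2*c^2 - a^2)
                             / ((b^2 - c^2) * (2*b^2*c^2 - a^2*b^2 - a^2*c^2))).
Definition z4 a b c := sqrt (c^2 * (c^2 - a^2)^2 * (2*b^2 - a^2)
                             / ((c^2 - b^2) * (2*b^2*c^2 - a^2*b^2 - a^2*c^2))).
Definition x5 a b c := sqrt ((a^2 - c^2)^3 * (2*b^2 - a^2 - c^2)^3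
                             / (a^2 * (b^2 - a^2) * (a^2 + b^2 - 2*c^2)^3)).
Definition y5 a b c := sqrt ((b^2 - c^2)^3 * (2*a^2 - b^2 - c^2)^3
                             / (b^2 * (a^2 - b^2) * (a^2 + b^2 - 2*c^2)^3)).
Definition x6 a b c := sqrt ((a^2 - b^2)^3 / (a^2 * (a^2 - c^2))).
Definition z6 a b c := sqrt ((b^2 - c^2)^3 / (c^2 * (a^2 - c^2))).
Definition y7 a b c := sqrt ((b^2 - a^2)^3 * (2*c^2 - b^2 - a^2)^3
                             / (b^2 * (c^2 - b^2) * (b^2 + c^2 - 2*a^2)^3)).
Definition z7 a b c := sqrt ((c^2 - a^2)^3 * (2*b^2 - c^2 - a^2)^3
                             / (c^2 * (b^2 - c^2) * (b^2 + c^2 - 2*a^2)^3)).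

Definition Q6 a b c := 2*b^4 + 2*c^4 - a^2*b^2 - a^2*c^2 - 2*b^2*c^2.

(* Main.v *)
Require Import Defs.
From Stdlib Require Import Lra Nsatz.
From Stdlib Require Import Reals.
From Coquelicot Require Import Coquelicot.
Open Scope R_scope.


Lemma trig_param X Y : X^2 + Y^2 = 1 ->
  exists t, 0 <= t < 2*PI /\ cos t = X /\ sin t = Y.
Proof.
  intros H.
  assert (HX : -1 <= X <= 1) by nra.
  destruct (Rle_lt_dec 0 Y) as [HY|HY].
  - exists (acos X). pose proof (acos_bound X). pose proof PI_RGT_0.
    split; [lra|]. split; [apply cos_acos; auto|].
    rewrite sin_acos by auto.
    replace (1 - X²) with (Y^2) by (unfold Rsqr; lra).
    apply sqrt_pow2; auto.
  - exists (2*PI - acos X). pose proof (acos_bound X). pose proof PI_RGT_0.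
    assert (acos X <> 0).
    { intro E. assert (cos (acos X) = 1) by (rewrite E; apply cos_0).
      rewrite cos_acos in H2 by auto. subst. nra. }
    split; [split; lra|].
    rewrite cos_minus, sin_minus, cos_2PI, sin_2PI, cos_acos, sin_acos by auto.
    split; [ring|].
    replace (1 - X²) with ((-Y)^2) by (unfold Rsqr; lra).
    rewrite sqrt_pow2 by lra. ring.
Qed.

Lemma pm_of_sq r x : x^2 = r -> pm (sqrt r) x.
Proof.
  intros H; subst. unfold pm.
  rewrite <- Rsqr_pow2, sqrt_Rsqr_abs.
  destruct (Rle_lt_dec 0 x).
  - left. rewrite Rabs_right; lra.
  - right. rewrite Rabs_left; lra.
Qed.

Lemma sq_of_pm r x : 0 <= r -> pm (sqrt r) x -> x^2 = r.
Proof.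
  intros H [E|E]; subst.
  - apply pow2_sqrt; auto.
  - replace ((- sqrt r)^2) with (sqrt r ^2) by ring. apply pow2_sqrt; auto.
Qed.

Definition on2 (f g : R -> R) (x y : R) : Prop :=
  exists t, 0 <= t < 2*PI /\ f t = x /\ g t = y.

Lemma ell_on A B x y : A <> 0 -> B <> 0 ->
  (on2 (fun t => A * cos t) (fun t => B * sin t) x y <-> x^2/A^2 + y^2/B^2 = 1).
Proof.
  intros HA HB. split.
  - intros [t [_ [E1 E2]]]. subst. pose proof (sin2_cos2 t). unfold Rsqr in H.
    field_simplify; auto. nra.
  - intros H. destruct (trig_param (x/A) (y/B)) as [t [Ht [E1 E2]]].
    { field_simplify; auto. rewrite <- H. field. auto. }
    exists t. split; auto. split.
    + rewrite E1. field; auto.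
    + rewrite E2. field; auto.
Qed.

Lemma ast_on P Q x y :
  (on2 (fun t => P * cos t ^ 3) (fun t => Q * sin t ^ 3) x y <->
   exists X Y, X^2 + Y^2 = 1 /\ x = P * X^3 /\ y = Q * Y^3).
Proof.
  split.
  - intros [t [_ [E1 E2]]]. exists (cos t), (sin t).
    pose proof (sin2_cos2 t). unfold Rsqr in H. split; [nra|]. auto.
  - intros [X [Y [H [E1 E2]]]]. destruct (trig_param X Y H) as [t [Ht [C1 C2]]].
    exists t. subst. auto.
Qed.

Lemma xy_tr (f g : R -> pt) f1 f2 g1 g2 u v :
  (forall t, f t = (f1 t, f2 t, 0)) -> (forall t, g t = (g1 t, g2 t, 0)) ->
  (forall x y, on2 f1 f2 x y /\ on2 g1 g2 x y <-> pm u x /\ pm v y) ->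
  intersect_at f g (pts_xy u v).
Proof.
  intros Hf Hg H [[x y] z]. unfold pts_xy, on_curve, px, py, pz; simpl. split.
  - intros [[t [Ht E1]] [s [Hs E2]]]. rewrite Hf in E1. rewrite Hg in E2.
    injection E1 as Ex Ey Ez. injection E2 as Fx Fy Fz.
    assert (pm u x /\ pm v y) as [A1 A2] by (apply H; split; [exists t|exists s]; auto).
    repeat split; auto; lra.
  - intros [Hx [Hy Hz]]. destruct (proj2 (H x y) (conj Hx Hy)) as
      [[t [Ht [E1 E2]]] [s [Hs [E3 E4]]]].
    split; [exists t|exists s]; split; auto; [rewrite Hf|rewrite Hg]; rewrite ?E1, ?E2, ?E3, ?E4, Hz; auto.
Qed.

Lemma xz_tr (f g : R -> pt) f1 f2 g1 g2 u v :
  (forall t, f t = (f1 t, 0, f2 t)) -> (forall t, g t = (g1 t, 0, g2 t)) ->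
  (forall x y, on2 f1 f2 x y /\ on2 g1 g2 x y <-> pm u x /\ pm v y) ->
  intersect_at f g (pts_xz u v).
Proof.
  intros Hf Hg H [[x y] z]. unfold pts_xz, on_curve, px, py, pz; simpl. split.
  - intros [[t [Ht E1]] [s [Hs E2]]]. rewrite Hf in E1. rewrite Hg in E2.
    injection E1 as Ex Ey Ez. injection E2 as Fx Fy Fz.
    assert (pm u x /\ pm v z) as [A1 A2] by (apply H; split; [exists t|exists s]; auto).
    repeat split; auto; lra.
  - intros [Hx [Hy Hz]]. destruct (proj2 (H x z) (conj Hx Hz)) as
      [[t [Ht [E1 E2]]] [s [Hs [E3 E4]]]].
    split; [exists t|exists s]; split; auto; [rewrite Hf|rewrite Hg]; rewrite ?E1, ?E2, ?E3, ?E4, Hy; auto.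
Qed.

Lemma yz_tr (f g : R -> pt) f1 f2 g1 g2 u v :
  (forall t, f t = (0, f1 t, f2 t)) -> (forall t, g t = (0, g1 t, g2 t)) ->
  (forall x y, on2 f1 f2 x y /\ on2 g1 g2 x y <-> pm u x /\ pm v y) ->
  intersect_at f g (pts_yz u v).
Proof.
  intros Hf Hg H [[x y] z]. unfold pts_yz, on_curve, px, py, pz; simpl. split.
  - intros [[t [Ht E1]] [s [Hs E2]]]. rewrite Hf in E1. rewrite Hg in E2.
    injection E1 as Ex Ey Ez. injection E2 as Fx Fy Fz.
    assert (pm u y /\ pm v z) as [A1 A2] by (apply H; split; [exists t|exists s]; auto).
    repeat split; auto; lra.
  - intros [Hx [Hy Hz]]. destruct (proj2 (H y z) (conj Hy Hz)) as
      [[t [Ht [E1 E2]]] [s [Hs [E3 E4]]]].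
    split; [exists t|exists s]; split; auto; [rewrite Hf|rewrite Hg]; rewrite ?E1, ?E2, ?E3, ?E4, Hx; auto.
Qed.

Lemma cube_root_ex P u x : 0 <= P -> 0 <= u -> pm (sqrt (P^2*u^3)) x ->
  exists X, X^2 = u /\ x = P*X^3.
Proof.
  intros HP Hu Hx.
  assert (E : sqrt (P^2*u^3) = P*u*sqrt u).
  { replace (P^2*u^3) with ((P*u)*(P*u)*u) by ring.
    assert (0 <= P*u) by (apply Rmult_le_pos; auto).
    rewrite sqrt_mult by (try apply Rmult_le_pos; auto).
    rewrite sqrt_square by auto. ring. }
  rewrite E in Hx. destruct Hx as [Hx|Hx].
  - exists (sqrt u). split; [apply pow2_sqrt; auto|].
    rewrite Hx. replace (sqrt u ^3) with (sqrt u ^2 * sqrt u) by ring.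
    rewrite pow2_sqrt; auto. ring.
  - exists (- sqrt u). split; [replace ((- sqrt u)^2) with (sqrt u^2) by ring; apply pow2_sqrt; auto|].
    rewrite Hx. replace ((- sqrt u) ^3) with (- (sqrt u ^2 * sqrt u)) by ring.
    rewrite pow2_sqrt; auto. ring.
Qed.

Lemma AE P Q A B u0 xr yr : 0 <= P -> 0 <= Q -> A <> 0 -> B <> 0 -> 0 <= u0 <= 1 ->
  P^2*u0^3/A^2 + Q^2*(1-u0)^3/B^2 = 1 ->
  (forall u, 0 <= u <= 1 -> P^2*u^3/A^2 + Q^2*(1-u)^3/B^2 = 1 -> u = u0) ->
  xr = P^2*u0^3 -> yr = Q^2*(1-u0)^3 ->
  forall x y, (on2 (fun t => P * cos t ^ 3) (fun t => Q * sin t ^ 3) x y /\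
               on2 (fun t => A * cos t) (fun t => B * sin t) x y) <->
              pm (sqrt xr) x /\ pm (sqrt yr) y.
Proof.
  intros HP HQ HA HB Hu0 Heq Huniq Hxr Hyr x y.
  rewrite ast_on, ell_on by auto. split.
  - intros [[X [Y [HXY [Ex Ey]]]] He].
    assert (HX : X^2 = u0).
    { apply Huniq. split; nra.
      replace (1 - X^2) with (Y^2) by lra. rewrite <- He, Ex, Ey. field; auto. }
    split; apply pm_of_sq.
    + rewrite Hxr, Ex, <- HX. ring.
    + rewrite Hyr, Ey. replace (1 - u0) with (Y^2) by lra. ring.
  - intros [Hx Hy]. subst xr yr.
    destruct (cube_root_ex P u0 x HP ltac:(lra) Hx) as [X [HX Ex]].
    destruct (cube_root_ex Q (1-u0) y HQ ltac:(lra) Hy) as [Y [HY Ey]].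
    split.
    + exists X, Y. split; [lra|auto].
    + rewrite Ex, Ey. rewrite <- Heq. rewrite <- HY. rewrite <- HX. field; auto.
Qed.

Lemma lin2 a1 b1 a2 b2 X Y : a1*X + b1*Y = 0 -> a2*X + b2*Y = 0 -> a1*b2 - a2*b1 <> 0 ->
  X = 0 /\ Y = 0.
Proof.
  intros H1 H2 H3.
  assert (X*(a1*b2 - a2*b1) = 0).
  { replace (X*(a1*b2 - a2*b1)) with (b2*(a1*X+b1*Y) - b1*(a2*X+b2*Y)) by ring. rewrite H1, H2; ring. }
  assert (Y*(a1*b2 - a2*b1) = 0).
  { replace (Y*(a1*b2 - a2*b1)) with (a1*(a2*X+b2*Y) - a2*(a1*X+b1*Y)) by ring. rewrite H1, H2; ring. }
  split; [destruct (Rmult_integral _ _ H) | destruct (Rmult_integral _ _ H0)]; auto; contradiction.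
Qed.

Lemma EE_uniq A1 B1 A2 B2 X0 Y0 X Y : A1<>0 -> B1<>0 -> A2<>0 -> B2<>0 ->
  X0/A1^2 + Y0/B1^2 = 1 -> X0/A2^2 + Y0/B2^2 = 1 ->
  1/(A1^2*B2^2) - 1/(A2^2*B1^2) <> 0 ->
  X/A1^2 + Y/B1^2 = 1 -> X/A2^2 + Y/B2^2 = 1 -> X = X0 /\ Y = Y0.
Proof.
  intros HA1 HB1 HA2 HB2 E1 E2 D F1 F2.
  destruct (lin2 (/A1^2) (/B1^2) (/A2^2) (/B2^2) (X - X0) (Y - Y0)).
  - rewrite <- (Rminus_diag_eq _ _ (eq_trans F1 (eq_sym E1))). field; auto.
  - rewrite <- (Rminus_diag_eq _ _ (eq_trans F2 (eq_sym E2))). field; auto.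
  - replace (/A1^2 * /B2^2 - /A2^2 * /B1^2) with (1/(A1^2*B2^2) - 1/(A2^2*B1^2)) by (field; auto). auto.
  - split; lra.
Qed.

Lemma EE A1 B1 A2 B2 X0 Y0 : A1<>0 -> B1<>0 -> A2<>0 -> B2<>0 -> 0 <= X0 -> 0 <= Y0 ->
  X0/A1^2 + Y0/B1^2 = 1 -> X0/A2^2 + Y0/B2^2 = 1 ->
  1/(A1^2*B2^2) - 1/(A2^2*B1^2) <> 0 ->
  forall x y, (on2 (fun t => A1 * cos t) (fun t => B1 * sin t) x y /\
               on2 (fun t => A2 * cos t) (fun t => B2 * sin t) x y) <->
              pm (sqrt X0) x /\ pm (sqrt Y0) y.
Proof.
  intros HA1 HB1 HA2 HB2 HX HY E1 E2 D x y.
  rewrite !ell_on by auto. split.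
  - intros [F1 F2]. destruct (EE_uniq A1 B1 A2 B2 X0 Y0 (x^2) (y^2)) as [G1 G2]; auto.
    split; apply pm_of_sq; auto.
  - intros [Hx Hy]. apply sq_of_pm in Hx; auto. apply sq_of_pm in Hy; auto.
    rewrite Hx, Hy. auto.
Qed.

Lemma uni1 al be u w : 0 <= al < 1 -> 1 <= be -> 0<=u<=1 -> 0<=w<=1 ->
  al*u^3+be*(1-u)^3 = 1 -> al*w^3+be*(1-w)^3 = 1 -> u = w.
Proof.
  intros Ha Hb.
  assert (K : forall u w, 0<=u<=1 -> 0<=w<=1 ->
     al*u^3+be*(1-u)^3 = 1 -> al*w^3+be*(1-w)^3 = 1 -> u < w -> False).
  { intros u1 w1 Hu Hw E1 E2 Hlt.
    destruct (Req_dec w1 1) as [->|Hw1].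
    - replace (1-1) with 0 in E2 by ring. lra.
    - assert (I : (al-1)*(w1-u1) = (1-u1)*(1-w1)*(w1-u1)*(al*(u1+w1+1)+be*(2-u1-w1))).
      { transitivity ((1-u1)*(1-w1)*(w1-u1)*(al*(u1+w1+1)+be*(2-u1-w1)) + (al*w1^3+be*(1-w1)^3 - 1)*(1-u1) - (al*u1^3+be*(1-u1)^3 - 1)*(1-w1)).
        - ring.
        - rewrite E1, E2. ring. }
      assert (0 <= (1-u1)*(1-w1)*(w1-u1)*(al*(u1+w1+1)+be*(2-u1-w1))).
      { repeat apply Rmult_le_pos; try lra. nra. }
      nra. }
  intros Hu Hw E1 E2. destruct (Rtotal_order u w) as [H|[H|H]]; auto.
  - exfalso; exact (K u w Hu Hw E1 E2 H).
  - exfalso; exact (K w u Hw Hu E2 E1 H).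
Qed.

Lemma uniAE1 P Q A B u0 : A<>0 -> B<>0 -> P^2/A^2 < 1 -> 1 <= Q^2/B^2 ->
  P^2*u0^3/A^2 + Q^2*(1-u0)^3/B^2 = 1 -> 0 <= u0 <= 1 ->
  forall u, 0<=u<=1 -> P^2*u^3/A^2 + Q^2*(1-u)^3/B^2 = 1 -> u = u0.
Proof.
  intros HA HB H1 H2 E0 Hu0 u Hu E.
  apply (uni1 (P^2/A^2) (Q^2/B^2)); auto.
  - split; auto. apply Rmult_le_pos; [apply pow2_ge_0|apply Rlt_le, Rinv_0_lt_compat, pow2_gt_0; auto].
  - rewrite <- E at 2. field; auto.
  - rewrite <- E0 at 2. field; auto.
Qed.

Lemma uniAE1' P Q A B u0 : A<>0 -> B<>0 -> 1 <= P^2/A^2 -> Q^2/B^2 < 1 ->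
  P^2*u0^3/A^2 + Q^2*(1-u0)^3/B^2 = 1 -> 0 <= u0 <= 1 ->
  forall u, 0<=u<=1 -> P^2*u^3/A^2 + Q^2*(1-u)^3/B^2 = 1 -> u = u0.
Proof.
  intros HA HB H1 H2 E0 Hu0 u Hu E.
  assert (1 - u = 1 - u0); [|lra].
  apply (uni1 (Q^2/B^2) (P^2/A^2)).
  - split; auto. apply Rmult_le_pos; [apply pow2_ge_0|apply Rlt_le, Rinv_0_lt_compat, pow2_gt_0; auto].
  - lra.
  - lra.
  - lra.
  - replace (1 - (1-u)) with u by ring. rewrite <- E at 2. field; auto.
  - replace (1 - (1-u0)) with u0 by ring. rewrite <- E0 at 2. field; auto.
Qed.

Lemma uniAE2 P Q A B u0 : A<>0 -> B<>0 -> P <> 0 -> Q <> 0 ->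
  P^2*u0^2/A^2 = Q^2*(1-u0)^2/B^2 -> 0 <= u0 <= 1 ->
  forall u, 0<=u<=1 -> P^2*u^3/A^2 + Q^2*(1-u)^3/B^2 = P^2*u0^3/A^2 + Q^2*(1-u0)^3/B^2 -> u = u0.
Proof.
  intros HA HB HP HQ E0 Hu0 u Hu E.
  set (al := P^2/A^2). set (be := Q^2/B^2).
  assert (Hal : 0 < al) by (unfold al; apply Rdiv_lt_0_compat; apply pow2_gt_0; auto).
  assert (Hbe : 0 < be) by (unfold be; apply Rdiv_lt_0_compat; apply pow2_gt_0; auto).
  assert (E0' : al*u0^2 = be*(1-u0)^2).
  { unfold al, be. replace (P^2/A^2*u0^2) with (P^2*u0^2/A^2) by (field; auto). rewrite E0. field; auto. }
  assert (E' : al*u^3 + be*(1-u)^3 = al*u0^3 + be*(1-u0)^3).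
  { unfold al, be. replace (P^2/A^2*u^3 + Q^2/B^2*(1-u)^3) with (P^2*u^3/A^2 + Q^2*(1-u)^3/B^2) by (field; auto).
    rewrite E. field; auto. }
  assert (I : (u-u0)^2*(al*(u+2*u0)+be*(3-u-2*u0)) = 0).
  { transitivity ((al*u^3 + be*(1-u)^3 - (al*u0^3 + be*(1-u0)^3)) - 3*(al*u0^2 - be*(1-u0)^2)*(u-u0)).
    - ring.
    - rewrite E', E0'. ring. }
  assert (0 < al*(u+2*u0)+be*(3-u-2*u0)).
  { destruct (Rle_lt_dec (u+2*u0) 1); nra. }
  apply Rmult_integral in I. destruct I as [I|I]; [|lra].
  destruct (Req_dec (u-u0) 0) as [Z|Z]; [lra|]. exfalso; exact (pow_nonzero _ 2 Z I).
Qed.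

Ltac nz := repeat match goal with
 | |- _ /\ _ => split
 | |- _ * _ <> 0 => apply Rmult_integral_contrapositive_currified
 | |- _ ^ _ <> 0 => apply pow_nonzero
 | |- _ / _ <> 0 => unfold Rdiv; apply Rmult_integral_contrapositive_currified
 | |- / _ <> 0 => apply Rinv_neq_0_compat
 | |- _ <> 0 => assumption
 | |- _ <> 0 => let H := fresh in intro H; nra
 end.

Ltac posR := repeat match goal with
  | |- _ > _ => unfold Rgt
  | |- 0 < _ * _ => apply Rmult_lt_0_compat
  | |- 0 < / _ => apply Rinv_0_lt_compat
  | |- 0 < _ / _ => apply Rdiv_lt_0_compat
  | |- 0 < _ ^ _ => apply pow_lt
  | |- 0 <= _ * _ => apply Rmult_le_pos
  | |- 0 <= / _ => apply Rlt_le, Rinv_0_lt_compat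
  | |- 0 <= _ / _ => apply Rmult_le_pos
  | |- 0 <= _ ^ 2 => apply pow2_ge_0
  | |- 0 <= _ ^ _ => apply pow_le
  | |- 0 < _ + _ => apply Rplus_lt_le_0_compat
  | |- 0 <= _ + _ => apply Rplus_le_le_0_compat
  end.

Lemma ratio_lt1 n d : 0 < d -> 0 <= n < d -> n^2/d^2 < 1.
Proof. intros. apply Rlt_div_l; [apply pow_lt; auto|]. nra. Qed.
Lemma ratio_ge1 n d : 0 < d <= n -> 1 <= n^2/d^2.
Proof. intros. assert (0 < d^2) by (apply pow_lt; lra).
  apply (Rmult_le_reg_r (d^2)); auto. field_simplify; nra. Qed.

Ltac facts a b c :=
  assert (ha : 0 < a) by lra; assert (hb : 0 < b) by lra;
  assert (hA : b^2 < a^2) by nra; assert (hB : c^2 < b^2) by nra;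
  assert (hC : 0 < c^2) by nra.

Lemma part1 a b c : a > b -> b > c -> c > 0 -> a^2 >= 2*b^2 ->
  intersect_at (ellipse1 a b c) (astroida4 a b c) (pts_xy (x0 a b) (y0 a b)).
Proof.
  intros hab hbc hc H. facts a b c.
  apply (xy_tr _ _ (fun t => a*cos t) (fun t => b*sin t)
     (fun t => (a^2-b^2)/a * cos t^3) (fun t => (a^2-b^2)/b*sin t^3)); [reflexivity|reflexivity|].
  intros x y. rewrite and_comm. unfold x0, y0.
  set (u0 := a^2*(a^2-2*b^2)/((a^2-b^2)*(a^2+b^2))).
  assert (E1u : 1 - u0 = b^2*(2*a^2-b^2)/((a^2-b^2)*(a^2+b^2))) by (unfold u0; field; nz).
  assert (Hu0 : 0 <= u0 <= 1).
  { split; [|assert (0 <= 1-u0); [rewrite E1u|lra]]; unfold u0; posR; lra. }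
  assert (Heq : ((a^2-b^2)/a)^2*u0^3/a^2 + ((a^2-b^2)/b)^2*(1-u0)^3/b^2 = 1)
    by (rewrite E1u; unfold u0; field; nz).
  apply (AE _ _ a b u0); auto; try (posR; lra); try lra.
  - apply uniAE1; auto; try lra.
    + replace (((a^2-b^2)/a)^2/a^2) with ((a^2-b^2)^2/(a^2)^2) by (field; nz).
      apply ratio_lt1; lra.
    + replace (((a^2-b^2)/b)^2/b^2) with ((a^2-b^2)^2/(b^2)^2) by (field; nz).
      apply ratio_ge1; lra.
  - unfold u0. field; nz.
  - rewrite E1u. field; nz.
Qed.

Lemma part2 a b c : a > b -> b > c -> c > 0 -> a^2 >= 2*c^2 ->
  intersect_at (ellipse2 a b c) (astroida5 a b c) (pts_xz (x1 a c) (z1 a c)).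
Proof.
  intros hab hbc hc H. facts a b c.
  apply (xz_tr _ _ (fun t => a*cos t) (fun t => c*sin t)
     (fun t => (a^2-c^2)/a * cos t^3) (fun t => (a^2-c^2)/c*sin t^3)); [reflexivity|reflexivity|].
  intros x y. rewrite and_comm. unfold x1, z1.
  set (u0 := a^2*(a^2-2*c^2)/((a^2-c^2)*(a^2+c^2))).
  assert (E1u : 1 - u0 = c^2*(2*a^2-c^2)/((a^2-c^2)*(a^2+c^2))) by (unfold u0; field; nz).
  assert (Hu0 : 0 <= u0 <= 1).
  { split; [|assert (0 <= 1-u0); [rewrite E1u|lra]]; unfold u0; posR; lra. }
  assert (Heq : ((a^2-c^2)/a)^2*u0^3/a^2 + ((a^2-c^2)/c)^2*(1-u0)^3/c^2 = 1)
    by (rewrite E1u; unfold u0; field; nz).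
  apply (AE _ _ a c u0); auto; try (posR; lra); try lra.
  - apply uniAE1; auto; try lra.
    + replace (((a^2-c^2)/a)^2/a^2) with ((a^2-c^2)^2/(a^2)^2) by (field; nz).
      apply ratio_lt1; lra.
    + replace (((a^2-c^2)/c)^2/c^2) with ((a^2-c^2)^2/(c^2)^2) by (field; nz).
      apply ratio_ge1; lra.
  - unfold u0. field; nz.
  - rewrite E1u. field; nz.
Qed.

Lemma part3 a b c : a > b -> b > c -> c > 0 -> b^2 >= 2*c^2 ->
  intersect_at (ellipse3 a b c) (astroida6 a b c) (pts_yz (y2 b c) (z2 b c)).
Proof.
  intros hab hbc hc H. facts a b c.
  apply (yz_tr _ _ (fun t => b*cos t) (fun t => c*sin t)
     (fun t => (b^2-c^2)/b * cos t^3) (fun t => (b^2-c^2)/c*sin t^3)); [reflexivity|reflexivity|].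
  intros x y. rewrite and_comm. unfold y2, z2.
  set (u0 := b^2*(b^2-2*c^2)/((b^2-c^2)*(b^2+c^2))).
  assert (E1u : 1 - u0 = c^2*(2*b^2-c^2)/((b^2-c^2)*(b^2+c^2))) by (unfold u0; field; nz).
  assert (Hu0 : 0 <= u0 <= 1).
  { split; [|assert (0 <= 1-u0); [rewrite E1u|lra]]; unfold u0; posR; lra. }
  assert (Heq : ((b^2-c^2)/b)^2*u0^3/b^2 + ((b^2-c^2)/c)^2*(1-u0)^3/c^2 = 1)
    by (rewrite E1u; unfold u0; field; nz).
  apply (AE _ _ b c u0); auto; try (posR; lra); try lra.
  - apply uniAE1; auto; try lra.
    + replace (((b^2-c^2)/b)^2/b^2) with ((b^2-c^2)^2/(b^2)^2) by (field; nz).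
      apply ratio_lt1; lra.
    + replace (((b^2-c^2)/c)^2/c^2) with ((b^2-c^2)^2/(c^2)^2) by (field; nz).
      apply ratio_ge1; lra.
  - unfold u0. field; nz.
  - rewrite E1u. field; nz.
Qed.

Lemma part7 a b c : a > b -> b > c -> c > 0 -> a^2 + c^2 >= 2*b^2 ->
  intersect_at (astroida4 a b c) (ellipse7 a b c) (pts_xy (x5 a b c) (y5 a b c)).
Proof.
  intros hab hbc hc H. facts a b c.
  apply (xy_tr _ _ (fun t => (a^2-b^2)/a * cos t^3) (fun t => (a^2-b^2)/b*sin t^3)
     (fun t => (a^2-c^2)/a*cos t) (fun t => (b^2-c^2)/b*sin t)); [reflexivity|reflexivity|].
  intros x y. unfold x5, y5.
  set (u0 := (a^2-c^2)*(a^2+c^2-2*b^2)/((a^2-b^2)*(a^2+b^2-2*c^2))).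
  assert (E1u : 1 - u0 = (b^2-c^2)*(2*a^2-b^2-c^2)/((a^2-b^2)*(a^2+b^2-2*c^2))) by (unfold u0; field; nz).
  assert (Hu0 : 0 <= u0 <= 1).
  { split; [|assert (0 <= 1-u0); [rewrite E1u|lra]]; unfold u0; posR; lra. }
  assert (Heq : ((a^2-b^2)/a)^2*u0^3/((a^2-c^2)/a)^2 + ((a^2-b^2)/b)^2*(1-u0)^3/((b^2-c^2)/b)^2 = 1)
    by (rewrite E1u; unfold u0; field; nz).
  apply (AE _ _ _ _ u0); auto; try (posR; lra); try lra; try nz.
  - apply uniAE1; auto; try lra; try nz.
    + replace (((a^2-b^2)/a)^2/((a^2-c^2)/a)^2) with ((a^2-b^2)^2/(a^2-c^2)^2) by (field; nz).
      apply ratio_lt1; lra.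
    + replace (((a^2-b^2)/b)^2/((b^2-c^2)/b)^2) with ((a^2-b^2)^2/(b^2-c^2)^2) by (field; nz).
      apply ratio_ge1; lra.
  - unfold u0. field; nz.
  - rewrite E1u. field; nz.
Qed.

Lemma part9i a b c : a > b -> b > c -> c > 0 -> a^2 + c^2 <= 2*b^2 ->
  intersect_at (astroida6 a b c) (ellipse9 a b c) (pts_yz (y7 a b c) (z7 a b c)).
Proof.
  intros hab hbc hc H. facts a b c.
  apply (yz_tr _ _ (fun t => (b^2-c^2)/b * cos t^3) (fun t => (b^2-c^2)/c*sin t^3)
     (fun t => (a^2-b^2)/b*cos t) (fun t => (a^2-c^2)/c*sin t)); [reflexivity|reflexivity|].
  intros x y. unfold y7, z7.
  set (u0 := (a^2-b^2)*(a^2+b^2-2*c^2)/((b^2-c^2)*(2*a^2-b^2-c^2))).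
  assert (E1u : 1 - u0 = (2*b^2-a^2-c^2)*(a^2-c^2)/((b^2-c^2)*(2*a^2-b^2-c^2))) by (unfold u0; field; nz).
  assert (Hu0 : 0 <= u0 <= 1).
  { split; [|assert (0 <= 1-u0); [rewrite E1u|lra]]; unfold u0; posR; lra. }
  assert (Heq : ((b^2-c^2)/b)^2*u0^3/((a^2-b^2)/b)^2 + ((b^2-c^2)/c)^2*(1-u0)^3/((a^2-c^2)/c)^2 = 1)
    by (rewrite E1u; unfold u0; field; nz).
  apply (AE _ _ _ _ u0); auto; try (posR; lra); try lra; try nz.
  - apply uniAE1'; auto; try lra; try nz.
    + replace (((b^2-c^2)/b)^2/((a^2-b^2)/b)^2) with ((b^2-c^2)^2/(a^2-b^2)^2) by (field; nz).
      apply ratio_ge1; lra.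
    + replace (((b^2-c^2)/c)^2/((a^2-c^2)/c)^2) with ((b^2-c^2)^2/(a^2-c^2)^2) by (field; nz).
      apply ratio_lt1; lra.
  - unfold u0. field; nz.
  - rewrite E1u. field; nz.
Qed.

Lemma part8i a b c : a > b -> b > c -> c > 0 ->
  intersect_at (astroida5 a b c) (ellipse8 a b c) (pts_xz (x6 a b c) (z6 a b c)).
Proof.
  intros hab hbc hc. facts a b c.
  apply (xz_tr _ _ (fun t => (a^2-c^2)/a * cos t^3) (fun t => (a^2-c^2)/c*sin t^3)
     (fun t => (a^2-b^2)/a*cos t) (fun t => (b^2-c^2)/c*sin t)); [reflexivity|reflexivity|].
  intros x y. unfold x6, z6.
  set (u0 := (a^2-b^2)/(a^2-c^2)).
  assert (E1u : 1 - u0 = (b^2-c^2)/(a^2-c^2)) by (unfold u0; field; nz).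
  assert (Hu0 : 0 <= u0 <= 1).
  { split; [|assert (0 <= 1-u0); [rewrite E1u|lra]]; unfold u0; posR; lra. }
  assert (Heq : ((a^2-c^2)/a)^2*u0^3/((a^2-b^2)/a)^2 + ((a^2-c^2)/c)^2*(1-u0)^3/((b^2-c^2)/c)^2 = 1)
    by (rewrite E1u; unfold u0; field; nz).
  apply (AE _ _ _ _ u0); auto; try (posR; lra); try lra; try nz.
  - intros u Hu E. apply (uniAE2 ((a^2-c^2)/a) ((a^2-c^2)/c) ((a^2-b^2)/a) ((b^2-c^2)/c)); auto; try nz.
    + rewrite E1u. unfold u0. field; nz.
    + rewrite E, Heq. reflexivity.
  - unfold u0. field; nz.
  - rewrite E1u. field; nz.
Qed.

Definition n2f a c C S := C^2/a^2 + S^2/c^2.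

Lemma n2f_pos a c C S : 0 < a -> 0 < c -> C^2+S^2 = 1 -> 0 < n2f a c C S.
Proof.
  intros ha hc H. unfold n2f.
  assert (0 <= C^2/a^2) by (posR; lra). assert (0 <= S^2/c^2) by (posR; lra).
  destruct (Req_dec C 0) as [->|HC].
  - assert (0 < S^2/c^2); [|lra]. apply Rdiv_lt_0_compat; [nra|apply pow_lt; lra].
  - assert (0 < C^2/a^2); [|lra]. apply Rdiv_lt_0_compat; [apply pow2_gt_0; auto|apply pow_lt; lra].
Qed.

Lemma vnorm_eq a b c C S : 0 < a -> 0 < b -> 0 < c ->
  vnorm (normalN a b c (a*C, 0, c*S)) = sqrt (n2f a c C S).
Proof.
  intros. unfold vnorm, dot, normalN, px, py, pz, n2f; cbn [fst snd]. f_equal. field. nz.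
Qed.

Lemma pc_ky a b c C S : 0 < a -> 0 < b -> 0 < c -> C^2+S^2 = 1 ->
  principal_curvature a b c (a*C, 0, c*S) (1/(b^2*sqrt (n2f a c C S))).
Proof.
  intros ha hb hc H. pose proof (n2f_pos a c C S ha hc H) as Hn2.
  pose proof (sqrt_lt_R0 _ Hn2) as Hn.
  split.
  - unfold on_E, ellF, px, py, pz; cbn [fst snd]. rewrite <- H. field. nz.
  - exists (0, 1, 0). split; [|split].
    + unfold zero_pt. intro E. injection E. lra.
    + unfold dot, normalN, px, py, pz; cbn [fst snd]. field. nz.
    + exists 0. rewrite vnorm_eq by auto.
      unfold hessD, vadd, vscale, normalN, px, py, pz; cbn [fst snd].
      f_equal; [f_equal|]; field; nz.
Qed.

Lemma pc_kxz a b c C S : 0 < a -> 0 < b -> 0 < c -> C^2+S^2 = 1 ->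
  principal_curvature a b c (a*C, 0, c*S) (1/(a^2*c^2*n2f a c C S*sqrt (n2f a c C S))).
Proof.
  intros ha hb hc H. pose proof (n2f_pos a c C S ha hc H) as Hn2.
  pose proof (sqrt_lt_R0 _ Hn2) as Hn.
  split.
  - unfold on_E, ellF, px, py, pz; cbn [fst snd]. rewrite <- H. field. nz.
  - exists (S/c, 0, -C/a). split; [|split].
    + unfold zero_pt. intro E. injection E. intros E1 E2.
      assert (C = 0) by (apply (f_equal (fun t => -t*a)) in E1; field_simplify in E1; nz; lra).
      assert (S = 0) by (apply (f_equal (fun t => t*c)) in E2; field_simplify in E2; nz; lra).
      subst. lra.
    + unfold dot, normalN, px, py, pz; cbn [fst snd]. field. nz.
    + exists (S*C*(c^2-a^2)/(a^3*c^3*n2f a c C S)). rewrite vnorm_eq by auto.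
      replace (1/(a^2*c^2*n2f a c C S*sqrt (n2f a c C S))) with
        ((C^2+S^2)/(a^2*c^2*n2f a c C S*sqrt (n2f a c C S))) by (rewrite H; reflexivity).
      unfold hessD, vadd, vscale, normalN, px, py, pz; cbn [fst snd].
      assert (n2f a c C S <> 0) by lra.
      assert (sqrt (n2f a c C S) <> 0) by lra.
      assert ((C*c)^2 + (S*a)^2 <> 0).
      { replace ((C*c)^2 + (S*a)^2) with (a^2*c^2*n2f a c C S).
        - apply Rgt_not_eq. apply Rmult_lt_0_compat; [|exact Hn2]. posR; lra.
        - unfold n2f. field. split; lra. }
      unfold n2f in *.
      f_equal; [f_equal|]; field; nz.
Qed.

Lemma pc_only a b c C S k : 0 < a -> 0 < b -> 0 < c -> C^2+S^2 = 1 ->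
  principal_curvature a b c (a*C, 0, c*S) k ->
  k = 1/(a^2*c^2*n2f a c C S*sqrt (n2f a c C S)) \/ k = 1/(b^2*sqrt (n2f a c C S)).
Proof.
  intros ha hb hc H [_ [[[v1 v2] v3] [Hv [Hdot [mu Heq]]]]].
  pose proof (n2f_pos a c C S ha hc H) as Hn2.
  pose proof (sqrt_lt_R0 _ Hn2) as Hn.
  rewrite vnorm_eq in Heq by auto.
  set (n := sqrt (n2f a c C S)) in *.
  unfold hessD, vadd, vscale, normalN, dot, px, py, pz in Heq, Hdot; cbn [fst snd] in *.
  pose proof (f_equal (fun p => fst (fst p)) Heq) as E1.
  pose proof (f_equal (fun p => snd (fst p)) Heq) as E2.
  pose proof (f_equal (fun p => snd p) Heq) as E3. cbn [fst snd] in E1, E2, E3. clear Heq.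
  destruct (Req_dec v2 0) as [Z|Z].
  - left. subst v2.
    assert (HW : 0 < v1^2 + v3^2).
    { destruct (Req_dec v1 0) as [->|Z1].
      - destruct (Req_dec v3 0) as [->|Z3]; [exfalso; apply Hv; reflexivity|].
        pose proof (pow2_gt_0 _ Z3). nra.
      - pose proof (pow2_gt_0 _ Z1). nra. }
    assert (E13 : v1^2/a^2 + v3^2/c^2 = k*n*(v1^2+v3^2)).
    { transitivity (v1*(v1/a^2) + v3*(v3/c^2)); [field; nz|].
      rewrite E1, E3.
      transitivity (k*n*(v1^2+v3^2) + mu*(v1*(a*C/a^2) + 0*(0/b^2) + v3*(c*S/c^2))); [ring|].
      rewrite Hdot. ring. }
    assert (L : (v1^2/a^2 + v3^2/c^2)*n2f a c C S = (v1^2+v3^2)/(a^2*c^2)).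
    { transitivity ((v1^2+v3^2)*(C^2+S^2)/(a^2*c^2) + (1/a^2-1/c^2)*(v1*C/a - v3*S/c)*(v1*(a*C/a^2) + 0*(0/b^2) + v3*(c*S/c^2))).
      - unfold n2f. field. nz.
      - rewrite Hdot, H. field. nz. }
    rewrite E13 in L.
    assert (K : k*n*n2f a c C S = 1/(a^2*c^2)).
    { apply (Rmult_eq_reg_l (v1^2+v3^2)); [|lra].
      transitivity (k*n*(v1^2+v3^2)*n2f a c C S); [ring|]. rewrite L. field. nz. }
    apply (Rmult_eq_reg_l (n*n2f a c C S)); [|apply Rgt_not_eq; posR; lra].
    transitivity (k*n*n2f a c C S); [ring|]. rewrite K. field. split; lra.
  - right.
    assert (K : k*n = 1/b^2).
    { apply (Rmult_eq_reg_l v2); auto.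
      transitivity (k*n*v2 + mu*(0/b^2)); [field; nz|]. rewrite <- E2. field. nz. }
    apply (Rmult_eq_reg_l n); [|lra].
    rewrite Rmult_comm, K. field. split; lra.
Qed.

Lemma cc_kxz a b c C S : 0 < a -> 0 < b -> 0 < c -> C^2+S^2 = 1 ->
  curv_center a b c (a*C, 0, c*S) (1/(a^2*c^2*n2f a c C S*sqrt (n2f a c C S))) =
  ((a^2-c^2)/a*C^3, 0, -((a^2-c^2)/c)*S^3).
Proof.
  intros ha hb hc H.
  pose proof (n2f_pos a c C S ha hc H) as Hn2.
  pose proof (sqrt_lt_R0 _ Hn2) as Hn.
  unfold curv_center. rewrite vnorm_eq by auto.
  set (n := sqrt (n2f a c C S)) in *.
  replace (1/(a^2*c^2*n2f a c C S*n)) with ((C^2+S^2)/(a^2*c^2*n2f a c C S*n)) by (rewrite H; reflexivity).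
  unfold vadd, vscale, normalN, px, py, pz; cbn [fst snd].
  assert (n2f a c C S <> 0) by lra.
  assert (n <> 0) by lra.
  assert (C^2+S^2 <> 0) by lra.
  assert ((C*c)^2 + (S*a)^2 <> 0).
  { replace ((C*c)^2 + (S*a)^2) with (a^2*c^2*n2f a c C S).
    - apply Rgt_not_eq. apply Rmult_lt_0_compat; [|exact Hn2]. posR; lra.
    - unfold n2f. field. split; lra. }
  f_equal; [f_equal|].
  - transitivity ((a^2-c^2)/a*C^3/(C^2+S^2)); [|rewrite H; field; nz].
    unfold n2f in *. field. nz.
  - field. nz.
  - transitivity (-((a^2-c^2)/c)*S^3/(C^2+S^2)); [|rewrite H; field; nz].
    unfold n2f in *. field. nz.
Qed.

Lemma cc_ky a b c C S : 0 < a -> 0 < b -> 0 < c -> C^2+S^2 = 1 ->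
  curv_center a b c (a*C, 0, c*S) (1/(b^2*sqrt (n2f a c C S))) =
  ((a^2-b^2)/a*C, 0, -((b^2-c^2)/c)*S).
Proof.
  intros ha hb hc H.
  pose proof (n2f_pos a c C S ha hc H) as Hn2.
  pose proof (sqrt_lt_R0 _ Hn2) as Hn.
  unfold curv_center. rewrite vnorm_eq by auto.
  set (n := sqrt (n2f a c C S)) in *.
  unfold vadd, vscale, normalN, px, py, pz; cbn [fst snd].
  assert (n <> 0) by lra.
  f_equal; [f_equal|]; field; nz.
Qed.

Lemma k_diff a b c C S : 0 < a -> 0 < b -> 0 < c -> c < a -> C^2+S^2 = 1 ->
  1/(a^2*c^2*n2f a c C S*sqrt (n2f a c C S)) - 1/(b^2*sqrt (n2f a c C S)) =
  (a^2-c^2)*(C^2 - (a^2-b^2)/(a^2-c^2)) / (a^2*b^2*c^2*n2f a c C S*sqrt (n2f a c C S)).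
Proof.
  intros ha hb hc hac H.
  pose proof (n2f_pos a c C S ha hc H) as Hn2.
  pose proof (sqrt_lt_R0 _ Hn2) as Hn.
  set (n := sqrt (n2f a c C S)) in *.
  assert (n2f a c C S <> 0) by lra. assert (n <> 0) by lra.
  assert (E : a^2*c^2*n2f a c C S = a^2 - (a^2-c^2)*C^2).
  { transitivity (c^2*C^2 + a^2*S^2); [unfold n2f; field; nz|].
    replace (S^2) with (1 - C^2) by lra. ring. }
  apply (Rmult_eq_reg_l (a^2*b^2*c^2*n2f a c C S*n)); [|apply Rgt_not_eq; posR; lra].
  transitivity (b^2 - a^2*c^2*n2f a c C S); [field; nz|].
  rewrite E. field. nz.
Qed.

Lemma k_cmp a b c C S : 0 < a -> 0 < b -> 0 < c -> c < a -> C^2+S^2 = 1 ->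
  (C^2 >= (a^2-b^2)/(a^2-c^2) -> 1/(b^2*sqrt (n2f a c C S)) <= 1/(a^2*c^2*n2f a c C S*sqrt (n2f a c C S))) /\
  (C^2 <= (a^2-b^2)/(a^2-c^2) -> 1/(a^2*c^2*n2f a c C S*sqrt (n2f a c C S)) <= 1/(b^2*sqrt (n2f a c C S))).
Proof.
  intros ha hb hc hac H.
  pose proof (k_diff a b c C S ha hb hc hac H) as D.
  pose proof (n2f_pos a c C S ha hc H) as Hn2.
  pose proof (sqrt_lt_R0 _ Hn2) as Hn.
  set (n := sqrt (n2f a c C S)) in *.
  assert (Hd : 0 < a^2*b^2*c^2*n2f a c C S*n) by (posR; lra).
  assert (Hac2 : 0 < a^2-c^2) by nra.
  split; intros Hc.
  - assert (0 <= (a^2-c^2)*(C^2 - (a^2-b^2)/(a^2-c^2)) / (a^2*b^2*c^2*n2f a c C S*n)); [|lra].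
    apply Rmult_le_pos; [apply Rmult_le_pos; lra|apply Rlt_le, Rinv_0_lt_compat; auto].
  - assert (0 <= (a^2-c^2)*((a^2-b^2)/(a^2-c^2) - C^2) / (a^2*b^2*c^2*n2f a c C S*n)); [|].
    + apply Rmult_le_pos; [apply Rmult_le_pos; lra|apply Rlt_le, Rinv_0_lt_compat; auto].
    + assert ((a^2-c^2)*((a^2-b^2)/(a^2-c^2) - C^2) / (a^2*b^2*c^2*n2f a c C S*n) =
              - ((a^2-c^2)*(C^2 - (a^2-b^2)/(a^2-c^2)) / (a^2*b^2*c^2*n2f a c C S*n))) by (field; lra).
      lra.
Qed.

Lemma sheets a b c C S : 0 < a -> 0 < b -> 0 < c -> c < a -> C^2+S^2 = 1 ->
  let p := (a*C, 0, c*S) in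
  let kxz := 1/(a^2*c^2*n2f a c C S*sqrt (n2f a c C S)) in
  let ky := 1/(b^2*sqrt (n2f a c C S)) in
  let u0 := (a^2-b^2)/(a^2-c^2) in
  (C^2 >= u0 -> caustic_sheet2 a b c (curv_center a b c p kxz) /\
                caustic_sheet1 a b c (curv_center a b c p ky)) /\
  (C^2 <= u0 -> caustic_sheet1 a b c (curv_center a b c p kxz) /\
                caustic_sheet2 a b c (curv_center a b c p ky)).
Proof.
  intros ha hb hc hac H p kxz ky u0.
  destruct (k_cmp a b c C S ha hb hc hac H) as [K1 K2].
  pose proof (pc_kxz a b c C S ha hb hc H) as P1.
  pose proof (pc_ky a b c C S ha hb hc H) as P2.
  pose proof (pc_only a b c C S) as PO.
  split; intros Hc; split.
  - exists p, kxz. split; auto. split; auto.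
    intros k' Hk'. destruct (PO k' ha hb hc H Hk') as [->| ->]; [unfold kxz, ky; lra|apply K1; auto].
  - exists p, ky. split; auto. split; auto.
    intros k' Hk'. destruct (PO k' ha hb hc H Hk') as [->| ->]; [apply K1; auto|unfold kxz, ky; lra].
  - exists p, kxz. split; auto. split; auto.
    intros k' Hk'. destruct (PO k' ha hb hc H Hk') as [->| ->]; [unfold kxz, ky; lra|apply K2; auto].
  - exists p, ky. split; auto. split; auto.
    intros k' Hk'. destruct (PO k' ha hb hc H Hk') as [->| ->]; [apply K2; auto|unfold kxz, ky; lra].
Qed.

Lemma cube_lt x y : 0 <= x < y -> x^3 < y^3.
Proof. intros. assert (E : y^3 - x^3 = (y-x)*(y^2+x*y+x^2)) by ring.
  assert (0 < (y-x)*(y^2+x*y+x^2)) by (apply Rmult_lt_0_compat; nra). lra. Qed.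

Lemma Rabs_sqrt y : Rabs y = sqrt (y^2).
Proof. rewrite <- Rsqr_pow2, sqrt_Rsqr_abs. reflexivity. Qed.

Lemma abs3_ge P u0 X : 0 < P -> 0 <= u0 -> Rabs (P*X^3) >= sqrt (P^2*u0^3) -> X^2 >= u0.
Proof.
  intros HP Hu H. rewrite Rabs_sqrt in H.
  apply Rge_le, sqrt_le_0 in H; [|posR; lra|apply pow2_ge_0].
  destruct (Rlt_le_dec (X^2) u0) as [L|L]; [|lra].
  pose proof (cube_lt (X^2) u0 ltac:(split; [apply pow2_ge_0|auto])).
  assert (P^2*(X^2)^3 < P^2*u0^3) by (apply Rmult_lt_compat_l; [posR|]; auto).
  replace ((P*X^3)^2) with (P^2*(X^2)^3) in H by ring. lra.
Qed.

Lemma abs3_le P u0 X : 0 < P -> 0 <= u0 -> Rabs (P*X^3) <= sqrt (P^2*u0^3) -> X^2 <= u0.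
Proof.
  intros HP Hu H. rewrite Rabs_sqrt in H.
  apply sqrt_le_0 in H; [|apply pow2_ge_0|posR; lra].
  destruct (Rlt_le_dec u0 (X^2)) as [L|L]; [|lra].
  pose proof (cube_lt u0 (X^2) ltac:(split; auto)).
  assert (P^2*u0^3 < P^2*(X^2)^3) by (apply Rmult_lt_compat_l; [posR|]; auto).
  replace ((P*X^3)^2) with (P^2*(X^2)^3) in H by ring. lra.
Qed.

Lemma abs1_ge P u0 X : 0 < P -> 0 <= u0 -> Rabs (P*X) >= sqrt (P^2*u0) -> X^2 >= u0.
Proof.
  intros HP Hu H. rewrite Rabs_sqrt in H.
  apply Rge_le, sqrt_le_0 in H; [|posR; lra|apply pow2_ge_0].
  destruct (Rlt_le_dec (X^2) u0) as [L|L]; [|lra].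
  assert (P^2*(X^2) < P^2*u0) by (apply Rmult_lt_compat_l; [posR|]; auto).
  replace ((P*X)^2) with (P^2*(X^2)) in H by ring. lra.
Qed.

Lemma abs1_le P u0 X : 0 < P -> 0 <= u0 -> Rabs (P*X) <= sqrt (P^2*u0) -> X^2 <= u0.
Proof.
  intros HP Hu H. rewrite Rabs_sqrt in H.
  apply sqrt_le_0 in H; [|apply pow2_ge_0|posR; lra].
  destruct (Rlt_le_dec u0 (X^2)) as [L|L]; [|lra].
  assert (P^2*u0 < P^2*(X^2)) by (apply Rmult_lt_compat_l; [posR|]; auto).
  replace ((P*X)^2) with (P^2*(X^2)) in H by ring. lra.
Qed.

Lemma x6_ast a b c : a > b -> b > c -> c > 0 ->
  x6 a b c = sqrt (((a^2-c^2)/a)^2*((a^2-b^2)/(a^2-c^2))^3).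
Proof. intros hab hbc hc. facts a b c. unfold x6. f_equal. field. nz. Qed.

Lemma x6_ell a b c : a > b -> b > c -> c > 0 ->
  x6 a b c = sqrt (((a^2-b^2)/a)^2*((a^2-b^2)/(a^2-c^2))).
Proof. intros hab hbc hc. facts a b c. unfold x6. f_equal. field. nz. Qed.

Lemma part8c a b c : a > b -> b > c -> c > 0 ->
   (let S := caustic_sheet1 a b c in let T := caustic_sheet2 a b c in
    let outer p := Rabs (px p) >= x6 a b c in
    let inner p := Rabs (px p) <= x6 a b c in
    ((forall p, on_curve (astroida5 a b c) p -> outer p -> S p) /\
     (forall p, on_curve (astroida5 a b c) p -> inner p -> T p) \/
     (forall p, on_curve (astroida5 a b c) p -> outer p -> T p) /\
     (forall p, on_curve (astroida5 a b c) p -> inner p -> S p)) /\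
    ((forall p, on_curve (ellipse8 a b c) p -> outer p -> S p) /\
     (forall p, on_curve (ellipse8 a b c) p -> inner p -> T p) \/
     (forall p, on_curve (ellipse8 a b c) p -> outer p -> T p) /\
     (forall p, on_curve (ellipse8 a b c) p -> inner p -> S p))).
Proof.
  intros hab hbc hc. facts a b c. cbv zeta.
  assert (hac : c < a) by lra.
  assert (HP : 0 < (a^2-c^2)/a) by (posR; lra).
  assert (HA : 0 < (a^2-b^2)/a) by (posR; lra).
  assert (Hu : 0 <= (a^2-b^2)/(a^2-c^2)) by (posR; lra).
  assert (EA : forall t, astroida5 a b c t =
     curv_center a b c (a*cos t, 0, c*(- sin t))
       (1/(a^2*c^2*n2f a c (cos t) (- sin t)*sqrt (n2f a c (cos t) (- sin t))))).
  { intros t. rewrite cc_kxz by (auto; pose proof (sin2_cos2 t); unfold Rsqr in *; nra).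
    unfold astroida5; apply pair_equal_spec; split; [apply pair_equal_spec; split|]; ring. }
  assert (EE8 : forall t, ellipse8 a b c t =
     curv_center a b c (a*cos t, 0, c*(- sin t))
       (1/(b^2*sqrt (n2f a c (cos t) (- sin t))))).
  { intros t. rewrite cc_ky by (auto; pose proof (sin2_cos2 t); unfold Rsqr in *; nra).
    unfold ellipse8; apply pair_equal_spec; split; [apply pair_equal_spec; split|]; ring. }
  assert (HCS : forall t, cos t ^2 + (- sin t)^2 = 1).
  { intros t. pose proof (sin2_cos2 t). unfold Rsqr in *. nra. }
  split.
  - right. split.
    + intros q [t [_ <-]] Hout. unfold px in Hout. unfold astroida5 in Hout; cbn [fst snd] in Hout.
      rewrite x6_ast in Hout by auto. apply abs3_ge in Hout; auto.
      rewrite EA. apply (sheets a b c (cos t) (- sin t)); auto.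
    + intros q [t [_ <-]] Hout. unfold px in Hout. unfold astroida5 in Hout; cbn [fst snd] in Hout.
      rewrite x6_ast in Hout by auto. apply abs3_le in Hout; auto.
      rewrite EA. apply (sheets a b c (cos t) (- sin t)); auto.
  - left. split.
    + intros q [t [_ <-]] Hout. unfold px in Hout. unfold ellipse8 in Hout; cbn [fst snd] in Hout.
      rewrite x6_ell in Hout by auto. apply abs1_ge in Hout; auto.
      rewrite EE8. apply (sheets a b c (cos t) (- sin t)); auto.
    + intros q [t [_ <-]] Hout. unfold px in Hout. unfold ellipse8 in Hout; cbn [fst snd] in Hout.
      rewrite x6_ell in Hout by auto. apply abs1_le in Hout; auto.
      rewrite EE8. apply (sheets a b c (cos t) (- sin t)); auto.
Qed.

Lemma part5 a b c : a > b -> b > c -> c > 0 -> b^2 >= 2*c^2 ->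
     intersect_at (ellipse2 a b c) (ellipse8 a b c) (pts_xz (x3 a b c) (z3 a b c)) /\
     x1 a c >= x3 a b c /\ z1 a c <= z3 a b c /\
     (1 / a^2 + 1 / c^2 = 3 / b^2 -> x1 a c = x3 a b c /\ z1 a c = z3 a b c).
Proof.
  intros hab hbc hc H. facts a b c.
  assert (HD : 0 < a^2*b^2 + b^2*c^2 - 2*a^2*c^2).
  { assert (0 <= a^2*(b^2-2*c^2)) by (apply Rmult_le_pos; lra). nra. }
  set (x3r := a^2*(a^2-b^2)^2*(2*c^2-b^2)/((a^2-c^2)*(2*a^2*c^2-a^2*b^2-b^2*c^2))).
  set (z3r := c^2*(c^2-b^2)^2*(2*a^2-b^2)/((c^2-a^2)*(2*a^2*c^2-a^2*b^2-b^2*c^2))).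
  set (x1r := a^4*(a^2-2*c^2)^3/((a^2-c^2)*(a^2+c^2)^3)).
  set (z1r := c^4*(2*a^2-c^2)^3/((a^2-c^2)*(a^2+c^2)^3)).
  assert (Hx3 : 0 <= x3r).
  { replace x3r with (a^2*(a^2-b^2)^2*(b^2-2*c^2)/((a^2-c^2)*(a^2*b^2 + b^2*c^2 - 2*a^2*c^2)))
      by (unfold x3r; field; nz). posR; lra. }
  assert (Hz3 : 0 <= z3r).
  { replace z3r with (c^2*(b^2-c^2)^2*(2*a^2-b^2)/((a^2-c^2)*(a^2*b^2 + b^2*c^2 - 2*a^2*c^2)))
      by (unfold z3r; field; nz). posR; lra. }
  assert (Hx1 : 0 <= x1r) by (unfold x1r; posR; lra).
  assert (Hz1 : 0 <= z1r) by (unfold z1r; posR; lra).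
  set (F5 := 2*a^4 - 2*a^2*c^2 + 2*c^4 - b^2*(a^2+c^2)).
  assert (HF5 : 0 < F5).
  { assert (0 <= (a^2-c^2)*(a^2-2*c^2)) by (apply Rmult_le_pos; lra).
    assert (0 < (a^2-b^2)*(a^2+c^2)) by (posR; lra).
    unfold F5. nra. }
  assert (Id : x1r - x3r = a^2*(b^2*(a^2+c^2) - 3*a^2*c^2)^2*F5/((a^2-c^2)*(a^2*b^2 + b^2*c^2 - 2*a^2*c^2)*(a^2+c^2)^3)).
  { unfold x1r, x3r, F5. field. nz. }
  assert (Idz : z3r - z1r = c^2/a^2*(x1r - x3r)).
  { unfold x1r, x3r, z1r, z3r. field. nz. }
  assert (Pos : 0 <= x1r - x3r) by (rewrite Id; posR; lra).
  assert (Posz : 0 <= z3r - z1r) by (rewrite Idz; posR; lra).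
  split; [|split; [|split]].
  - apply (xz_tr _ _ (fun t => a*cos t) (fun t => c*sin t)
     (fun t => (a^2-b^2)/a*cos t) (fun t => (b^2-c^2)/c*sin t)); [reflexivity|reflexivity|].
    unfold x3, z3. fold x3r z3r.
    apply EE; auto; try nz.
    + unfold x3r, z3r. field. nz.
    + unfold x3r, z3r. field. nz.
    + replace (1 / (a ^ 2 * ((b ^ 2 - c ^ 2) / c) ^ 2) - 1 / (((a ^ 2 - b ^ 2) / a) ^ 2 * c ^ 2))
        with (- ((a^2*b^2 + b^2*c^2 - 2*a^2*c^2)*(c^2*(a^2-b^2)+a^2*(b^2-c^2))/(a^2*c^2*(a^2-b^2)^2*(b^2-c^2)^2)))
        by (field; nz).
      assert (0 < (a^2*b^2 + b^2*c^2 - 2*a^2*c^2)*(c^2*(a^2-b^2)+a^2*(b^2-c^2))/(a^2*c^2*(a^2-b^2)^2*(b^2-c^2)^2))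
        by (posR; lra).
      lra.
  - unfold x1, x3. fold x1r x3r. apply Rle_ge, sqrt_le_1_alt. lra.
  - unfold z1, z3. fold z1r z3r. apply sqrt_le_1_alt. lra.
  - intros E.
    assert (E' : b^2*(a^2+c^2) = 3*a^2*c^2).
    { replace (b^2*(a^2+c^2)) with ((1/a^2+1/c^2)*(a^2*b^2*c^2)) by (field; nz).
      rewrite E. field. nz. }
    assert (Z : x1r - x3r = 0) by (rewrite Id, E'; field; nz).
    unfold x1, x3, z1, z3. fold x1r x3r z1r z3r.
    split; f_equal; nra.
Qed.

Lemma part6 a b c : a > b -> b > c -> c > 0 -> 2*b^2 >= a^2 -> a^2 >= 2*c^2 ->
     intersect_at (ellipse3 a b c) (ellipse9 a b c) (pts_yz (y4 a b c) (z4 a b c)) /\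
     (b^2 >= 2*c^2 ->
        (y2 b c >= y4 a b c /\ z2 b c <= z4 a b c <-> Q6 a b c >= 0)).
Proof.
  intros hab hbc hc H1 H2. facts a b c.
  assert (HD : 0 < a^2*b^2 + a^2*c^2 - 2*b^2*c^2).
  { assert (0 < b^2*(a^2-c^2)) by (posR; lra). assert (0 < c^2*(a^2-b^2)) by (posR; lra). nra. }
  set (y4r := b^2*(b^2-a^2)^2*(2*c^2-a^2)/((b^2-c^2)*(2*b^2*c^2-a^2*b^2-a^2*c^2))).
  set (z4r := c^2*(c^2-a^2)^2*(2*b^2-a^2)/((c^2-b^2)*(2*b^2*c^2-a^2*b^2-a^2*c^2))).
  set (y2r := b^4*(b^2-2*c^2)^3/((b^2-c^2)*(b^2+c^2)^3)).
  set (z2r := c^4*(2*b^2-c^2)^3/((b^2-c^2)*(b^2+c^2)^3)).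
  assert (Hy4 : 0 <= y4r).
  { replace y4r with (b^2*(a^2-b^2)^2*(a^2-2*c^2)/((b^2-c^2)*(a^2*b^2 + a^2*c^2 - 2*b^2*c^2)))
      by (unfold y4r; field; nz). posR; lra. }
  assert (Hz4 : 0 <= z4r).
  { replace z4r with (c^2*(a^2-c^2)^2*(2*b^2-a^2)/((b^2-c^2)*(a^2*b^2 + a^2*c^2 - 2*b^2*c^2)))
      by (unfold z4r; field; nz). posR; lra. }
  split.
  - apply (yz_tr _ _ (fun t => b*cos t) (fun t => c*sin t)
     (fun t => (a^2-b^2)/b*cos t) (fun t => (a^2-c^2)/c*sin t)); [reflexivity|reflexivity|].
    unfold y4, z4. fold y4r z4r.
    apply EE; auto; try nz.
    + unfold y4r, z4r. field. nz.
    + unfold y4r, z4r. field. nz.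
    + replace (1 / (b ^ 2 * ((a ^ 2 - c ^ 2) / c) ^ 2) - 1 / (((a ^ 2 - b ^ 2) / b) ^ 2 * c ^ 2))
        with (- (a^2*(b^2-c^2)*(c^2*(a^2-b^2)+b^2*(a^2-c^2))/(b^2*c^2*(a^2-b^2)^2*(a^2-c^2)^2)))
        by (field; nz).
      assert (0 < a^2*(b^2-c^2)*(c^2*(a^2-b^2)+b^2*(a^2-c^2))/(b^2*c^2*(a^2-b^2)^2*(a^2-c^2)^2))
        by (posR; lra).
      lra.
  - intros H3.
    assert (Hy2 : 0 <= y2r) by (unfold y2r; posR; lra).
    assert (HK : 0 < a^2*(b^2+c^2) - 3*b^2*c^2).
    { assert (0 < (a^2-b^2)*(b^2+c^2)) by (posR; lra).
      assert (0 <= b^2*(b^2-2*c^2)) by (apply Rmult_le_pos; lra). nra. }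
    set (K6 := b^2*(a^2*(b^2+c^2) - 3*b^2*c^2)^2/((b^2-c^2)*(a^2*b^2 + a^2*c^2 - 2*b^2*c^2)*(b^2+c^2)^3)).
    assert (HK6 : 0 < K6) by (unfold K6; posR; lra).
    assert (Id : y2r - y4r = K6 * Q6 a b c).
    { unfold y2r, y4r, K6, Q6. field. nz. }
    assert (Idz : z4r - z2r = c^2/b^2*(y2r - y4r)).
    { unfold y2r, y4r, z2r, z4r. field. nz. }
    assert (Hcb : 0 < c^2/b^2) by (posR; lra).
    unfold y2, y4, z2, z4. fold y2r y4r z2r z4r. split.
    + intros [Ha Hb]. apply Rge_le, sqrt_le_0 in Ha; auto.
      destruct (Rlt_le_dec (Q6 a b c) 0) as [L|L]; [|lra].
      assert (0 < K6 * (- Q6 a b c)) by (apply Rmult_lt_0_compat; lra). nra.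
    + intros HQ. assert (0 <= K6 * Q6 a b c) by (apply Rmult_le_pos; lra).
      assert (0 <= c^2/b^2*(y2r - y4r)) by (apply Rmult_le_pos; lra).
      split; [apply Rle_ge|]; apply sqrt_le_1_alt; lra.
Qed.

Lemma part8io a b c : a > b -> b > c -> c > 0 ->
   (forall p, pts_xz (x6 a b c) (z6 a b c) p ->
      (1 / a^2 + 1 / c^2 = 3 / b^2 -> on_E a b c p) /\
      (1 / a^2 + 1 / c^2 < 3 / b^2 -> inside_E a b c p) /\
      (1 / a^2 + 1 / c^2 > 3 / b^2 -> outside_E a b c p)).
Proof.
  intros hab hbc hc. facts a b c.
  intros [[x y] z] [Hx [Hy Hz]]. unfold px, py, pz in *; cbn [fst snd] in *.
  unfold x6, z6 in *.
  apply sq_of_pm in Hx; [|posR; lra]. apply sq_of_pm in Hz; [|posR; lra].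
  assert (E : ellF a b c (x, y, z) = 1 + (b^2)^3/(a^2*c^2)*(1/a^2+1/c^2-3/b^2)).
  { unfold ellF, px, py, pz; cbn [fst snd]. rewrite Hx, Hz, Hy. field. nz. }
  assert (Hk : 0 < (b^2)^3/(a^2*c^2)) by (posR; lra).
  unfold on_E, inside_E, outside_E. rewrite E.
  split; [|split]; intros Hs.
  - rewrite Hs. field. nz.
  - assert (0 < (b^2)^3/(a^2*c^2) * -(1/a^2+1/c^2-3/b^2)) by (apply Rmult_lt_0_compat; lra). nra.
  - assert (0 < (b^2)^3/(a^2*c^2) * (1/a^2+1/c^2-3/b^2)) by (apply Rmult_lt_0_compat; lra). nra.
Qed.

Definition K9 p s C := 9*p^3*C^3 + s^3*C^3 + 3*s^4*C^2 + 3*s^5*C + s^6 + 7*p*s^2*C^3 + 21*p*s^3*C^2 + 21*p*s^4*C + 7*p*s^5 + 15*p^2*s*C^3 + 51*p^2*s^2*C^2 + 54*p^2*s^3*C + 18*p^2*s^4 + 51*p^3*s*C^2 + 60*p^3*s^2*C + 20*p^3*s^3 + 18*p^4*C^2 + 24*p^4*s*C + 8*p^4*s^2.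

Lemma part9io a b c : a > b -> b > c -> c > 0 -> a^2 + c^2 <= 2*b^2 ->
     (forall p, pts_yz (y7 a b c) (z7 a b c) p ->
        (Q6 a b c = 0 -> on_E a b c p) /\
        (Q6 a b c < 0 -> inside_E a b c p) /\
        (Q6 a b c > 0 -> outside_E a b c p)).
Proof.
  intros hab hbc hc H. facts a b c.
  assert (H2 : 0 < 2*a^2-b^2-c^2) by lra.
  intros [[x y] z] [Hx [Hy Hz]]. unfold px, py, pz in *; cbn [fst snd] in *.
  unfold y7, z7 in *.
  apply sq_of_pm in Hy.
  2:{ replace ((b^2-a^2)^3*(2*c^2-b^2-a^2)^3/(b^2*(c^2-b^2)*(b^2+c^2-2*a^2)^3))
        with ((a^2-b^2)^3*(a^2+b^2-2*c^2)^3/(b^2*(b^2-c^2)*(2*a^2-b^2-c^2)^3)) by (field; nz).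
      posR; lra. }
  apply sq_of_pm in Hz.
  2:{ replace ((c^2-a^2)^3*(2*b^2-c^2-a^2)^3/(c^2*(b^2-c^2)*(b^2+c^2-2*a^2)^3))
        with ((a^2-c^2)^3*(2*b^2-a^2-c^2)^3/(c^2*(b^2-c^2)*(2*a^2-b^2-c^2)^3)) by (field; nz).
      posR; lra. }
  set (k := K9 (a^2-b^2) (2*b^2-a^2-c^2) (c^2) / ((b^2)^2*(c^2)^2*(b^2-c^2)*(2*a^2-b^2-c^2)^3)).
  assert (Hk : 0 < k).
  { unfold k, K9. apply Rdiv_lt_0_compat; [|posR; lra].
    assert (0 < 9*(a^2-b^2)^3*(c^2)^3) by (posR; lra).
    assert (0 <= 2*b^2-a^2-c^2) by lra.
    posR; lra. }
  assert (E : ellF a b c (x, y, z) = 1 + Q6 a b c * k).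
  { unfold ellF, px, py, pz; cbn [fst snd]. rewrite Hx, Hz, Hy. unfold k, K9, Q6. field. nz. }
  unfold on_E, inside_E, outside_E. rewrite E.
  split; [|split]; intros Hs.
  - rewrite Hs. ring.
  - assert (0 < - Q6 a b c * k) by (apply Rmult_lt_0_compat; lra). nra.
  - assert (0 < Q6 a b c * k) by (apply Rmult_lt_0_compat; lra). nra.
Qed.

Lemma Cdiv_RtoC (z : C) r : r <> 0 -> (z / RtoC r)%C = (fst z / r, snd z / r).
Proof.
  intros H. destruct z as [z1 z2]. unfold Cdiv, Cmult, Cinv, RtoC, Re, Im; cbn [fst snd].
  apply pair_equal_spec; split.
  all: field; try split; auto; intro E; apply H; nra.
Qed.

Lemma Cmult_RtoC_l r (z : C) : (RtoC r * z)%C = (r * fst z, r * snd z).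
Proof.
  destruct z as [z1 z2]. unfold Cmult, RtoC; cbn [fst snd].
  apply pair_equal_spec; split; ring.
Qed.

Lemma Cplus_pair (x1 x2 y1 y2 : R) : ((x1, x2) + (y1, y2))%C = (x1 + y1, x2 + y2).
Proof. reflexivity. Qed.

Lemma part4 a b c : a > b -> b > c -> c > 0 ->
  ((forall p, ~ (on_curve (ellipse1 a b c) p /\ on_curve (ellipse7 a b c) p)) /\
   (forall x y : C,
      (x * x / RtoC (a^2) + y * y / RtoC (b^2) = 1 /\
       RtoC (a^2) * (x * x) / RtoC ((a^2 - c^2)^2)
         + RtoC (b^2) * (y * y) / RtoC ((b^2 - c^2)^2) = 1)%C
      <-> (x * x = RtoC (xstar2 a b c) /\ y * y = RtoC (ystar2 a b c))%C) /\
   ystar2 a b c < 0).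
Proof.
  intros hab hbc hc. facts a b c.
  assert (HD : 0 < 2*a^2*b^2 - a^2*c^2 - b^2*c^2).
  { assert (0 < b^2*(a^2-c^2)) by (posR; lra). assert (0 < a^2*(b^2-c^2)) by (posR; lra). nra. }
  assert (Hys : ystar2 a b c < 0).
  { unfold ystar2.
    replace (b^2 * (b^2 - c^2)^2 * (2*a^2 - c^2) / ((b^2 - a^2) * (2*a^2*b^2 - b^2*c^2 - a^2*c^2)))
      with (- (b^2 * (b^2 - c^2)^2 * (2*a^2 - c^2) / ((a^2 - b^2) * (2*a^2*b^2 - a^2*c^2 - b^2*c^2))))
      by (field; nz).
    assert (0 < b^2 * (b^2 - c^2)^2 * (2*a^2 - c^2) / ((a^2 - b^2) * (2*a^2*b^2 - a^2*c^2 - b^2*c^2)))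
      by (posR; lra).
    lra. }
  assert (E1 : xstar2 a b c / a^2 + ystar2 a b c / b^2 = 1) by (unfold xstar2, ystar2; field; nz).
  assert (E2 : xstar2 a b c / ((a^2-c^2)/a)^2 + ystar2 a b c / ((b^2-c^2)/b)^2 = 1)
    by (unfold xstar2, ystar2; field; nz).
  assert (Det : 1/(a^2*((b^2-c^2)/b)^2) - 1/(((a^2-c^2)/a)^2*b^2) <> 0).
  { replace (1/(a^2*((b^2-c^2)/b)^2) - 1/(((a^2-c^2)/a)^2*b^2))
      with (c^2*(a^2-b^2)*(2*a^2*b^2 - a^2*c^2 - b^2*c^2)/(a^2*b^2*(a^2-c^2)^2*(b^2-c^2)^2))
      by (field; nz).
    apply Rgt_not_eq. posR; lra. }
  split; [|split; auto].
  - intros [[x y] z] [[t [Ht Et]] [s [Hs Es]]].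
    pose proof (f_equal (fun p => fst (fst p)) Et) as Ex1.
    pose proof (f_equal (fun p => snd (fst p)) Et) as Ey1.
    pose proof (f_equal (fun p => fst (fst p)) Es) as Ex2.
    pose proof (f_equal (fun p => snd (fst p)) Es) as Ey2.
    unfold ellipse1, ellipse7 in *; cbn [fst snd] in *.
    assert (F1 : x^2/a^2 + y^2/b^2 = 1).
    { apply (ell_on a b x y); try nz. exists t; split; [|split]; auto. }
    assert (F2 : x^2/((a^2-c^2)/a)^2 + y^2/((b^2-c^2)/b)^2 = 1).
    { apply ell_on; try nz. exists s; split; [|split]; auto. }
    destruct (EE_uniq a b ((a^2-c^2)/a) ((b^2-c^2)/b) (xstar2 a b c) (ystar2 a b c) (x^2) (y^2))
      as [_ G]; try nz; auto.
    pose proof (pow2_ge_0 y). lra.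
  - intros x y. generalize (x*x)%C (y*y)%C. intros [X1 X2] [Y1 Y2].
    rewrite !Cdiv_RtoC by nz. rewrite !Cmult_RtoC_l. cbn [fst snd]. rewrite !Cplus_pair.
    unfold RtoC.
    split.
    + intros [HA HB].
      pose proof (f_equal fst HA) as A1. pose proof (f_equal snd HA) as A2.
      pose proof (f_equal fst HB) as B1. pose proof (f_equal snd HB) as B2.
      cbn [fst snd] in A1, A2, B1, B2. clear HA HB.
      assert (G : X1 = xstar2 a b c /\ Y1 = ystar2 a b c).
      { apply (EE_uniq a b ((a^2-c^2)/a) ((b^2-c^2)/b)); try nz; auto.
        transitivity (a^2*X1/(a^2-c^2)^2 + b^2*Y1/(b^2-c^2)^2); [field; nz|exact B1]. }
      destruct G as [G1 G2].
      destruct (lin2 (/a^2) (/b^2) (a^2/(a^2-c^2)^2) (b^2/(b^2-c^2)^2) X2 Y2) as [G3 G4].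
      * transitivity (X2/a^2 + Y2/b^2); [field; nz|exact A2].
      * transitivity (a^2*X2/(a^2-c^2)^2 + b^2*Y2/(b^2-c^2)^2); [field; nz|exact B2].
      * replace (/a^2 * (b^2/(b^2-c^2)^2) - a^2/(a^2-c^2)^2 * /b^2)
          with (1/(a^2*((b^2-c^2)/b)^2) - 1/(((a^2-c^2)/a)^2*b^2)) by (field; nz).
        exact Det.
      * rewrite G1, G2, G3, G4. split; reflexivity.
    + intros [HA HB].
      pose proof (f_equal fst HA) as A1. pose proof (f_equal snd HA) as A2.
      pose proof (f_equal fst HB) as B1. pose proof (f_equal snd HB) as B2.
      cbn [fst snd] in A1, A2, B1, B2. clear HA HB. subst.
      split; apply injective_projections; cbn [fst snd].
      * exact E1.
      * field; nz.
      * transitivity (xstar2 a b c / ((a^2-c^2)/a)^2 + ystar2 a b c / ((b^2-c^2)/b)^2); [field; nz|exact E2].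
      * field; nz.
Qed.

Lemma part8t a b c : a > b -> b > c -> c > 0 ->
  forall p, pts_xz (x6 a b c) (z6 a b c) p -> tangent_at (astroida5 a b c) (ellipse8 a b c) p.
Proof.
  intros hab hbc hc. facts a b c. intros p Hp.
  destruct (proj2 (part8i a b c hab hbc hc p) Hp) as [[t [Ht Et]] [s [Hs Es]]].
  pose proof (f_equal (fun p => fst (fst p)) (eq_trans Et (eq_sym Es))) as X1.
  pose proof (f_equal (fun p => snd p) (eq_trans Et (eq_sym Es))) as Z1.
  unfold astroida5, ellipse8 in X1, Z1; cbn [fst snd] in X1, Z1.
  set (P := (a^2-c^2)/a) in *. set (Q := (a^2-c^2)/c) in *.
  set (A := (a^2-b^2)/a) in *. set (B := (b^2-c^2)/c) in *.
  assert (HP : 0 < P) by (unfold P; posR; lra). assert (HQ : 0 < Q) by (unfold Q; posR; lra).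
  assert (HA : 0 < A) by (unfold A; posR; lra). assert (HB : 0 < B) by (unfold B; posR; lra).
  set (C := cos t) in *. set (S := sin t) in *.
  assert (cs : cos s = P*C^3/A) by (rewrite X1; field; lra).
  assert (sn : sin s = Q*S^3/B) by (rewrite Z1; field; lra).
  set (u0 := (a^2-b^2)/(a^2-c^2)).
  assert (E1u : 1 - u0 = (b^2-c^2)/(a^2-c^2)) by (unfold u0; field; nz).
  assert (Hu0 : 0 < u0 < 1).
  { split; [|assert (0 < 1-u0); [rewrite E1u|lra]]; unfold u0; posR; lra. }
  assert (HCS : C^2 + S^2 = 1) by (unfold C, S; pose proof (sin2_cos2 t); unfold Rsqr in *; nra).
  assert (HC : C^2 = u0).
  { apply (uniAE2 P Q A B); try lra.
    - unfold P, Q, A, B. rewrite E1u. unfold u0. field. nz.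
    - split; [apply pow2_ge_0|pose proof (pow2_ge_0 S); lra].
    - transitivity 1.
      + pose proof (sin2_cos2 s) as T. unfold Rsqr in T. rewrite cs, sn in T.
        replace (1 - C^2) with (S^2) by lra. rewrite <- T. field. lra.
      + rewrite E1u. unfold P, Q, A, B, u0. field. nz. }
  assert (HS : S^2 = 1 - u0) by lra.
  assert (HC0 : C <> 0) by (intro Z; rewrite Z in HC; lra).
  assert (HS0 : S <> 0) by (intro Z; rewrite Z in HS; lra).
  exists t, s, (-(3*P*C^2*S), 0, 3*Q*S^2*C), (-(A*sin s), 0, B*cos s).
  split; [auto|split; [auto|split; [auto|split; [auto|]]]].
  split; [|split; [|split; [|split]]].
  - unfold curve_deriv, astroida5, px, py, pz; cbn [fst snd].
    split; [|split]; unfold C, S; auto_derive; auto; unfold P, Q; field; lra.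
  - unfold curve_deriv, ellipse8, px, py, pz; cbn [fst snd].
    split; [|split]; auto_derive; auto; unfold A, B; field; lra.
  - intro Z. pose proof (f_equal (fun p => fst (fst p)) Z) as Z'. unfold zero_pt in Z'; cbn [fst snd] in Z'.
    assert (0 < 3*P*C^2) by (apply Rmult_lt_0_compat; [lra|apply pow2_gt_0; auto]).
    apply HS0. apply (Rmult_eq_reg_l (3*P*C^2)); lra.
  - intro Z. pose proof (f_equal (fun p => fst (fst p)) Z) as Z1'.
    pose proof (f_equal (fun p => snd p) Z) as Z2'. unfold zero_pt in Z1', Z2'; cbn [fst snd] in Z1', Z2'.
    assert (sin s = 0) by (apply (Rmult_eq_reg_l A); lra).
    assert (cos s = 0) by (apply (Rmult_eq_reg_l B); lra).
    pose proof (sin2_cos2 s). unfold Rsqr in *. rewrite H, H0 in H1. lra.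
  - unfold cross, zero_pt, px, py, pz; cbn [fst snd].
    assert (Key : P^2*(C^2)^2/A^2 = Q^2*(S^2)^2/B^2).
    { rewrite HC, HS, E1u. unfold P, Q, A, B, u0. field. nz. }
    apply injective_projections; [apply injective_projections|]; cbn [fst snd]; try ring.
    rewrite cs, sn.
    transitivity (3*S*C*A*B*(P^2*(C^2)^2/A^2 - Q^2*(S^2)^2/B^2)); [field; lra|].
    rewrite Key. ring.
Qed.

Theorem lemma3 (a b c : R) (hab : a > b) (hbc : b > c) (hc : c > 0) :
  (* (1) *)
  (a^2 >= 2*b^2 ->
     intersect_at (ellipse1 a b c) (astroida4 a b c) (pts_xy (x0 a b) (y0 a b))) /\
  (* (2) *)
  (a^2 >= 2*c^2 ->
     intersect_at (ellipse2 a b c) (astroida5 a b c) (pts_xz (x1 a c) (z1 a c))) /\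
  (* (3) *)
  (b^2 >= 2*c^2 ->
     intersect_at (ellipse3 a b c) (astroida6 a b c) (pts_yz (y2 b c) (z2 b c))) /\
  (* (4) *)
  ((forall p, ~ (on_curve (ellipse1 a b c) p /\ on_curve (ellipse7 a b c) p)) /\
   (forall x y : C,
      (x * x / RtoC (a^2) + y * y / RtoC (b^2) = 1 /\
       RtoC (a^2) * (x * x) / RtoC ((a^2 - c^2)^2)
         + RtoC (b^2) * (y * y) / RtoC ((b^2 - c^2)^2) = 1)%C
      <-> (x * x = RtoC (xstar2 a b c) /\ y * y = RtoC (ystar2 a b c))%C) /\
   ystar2 a b c < 0) /\
  (* (5) *)
  (b^2 >= 2*c^2 ->
     intersect_at (ellipse2 a b c) (ellipse8 a b c) (pts_xz (x3 a b c) (z3 a b c)) /\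
     x1 a c >= x3 a b c /\ z1 a c <= z3 a b c /\
     (1 / a^2 + 1 / c^2 = 3 / b^2 -> x1 a c = x3 a b c /\ z1 a c = z3 a b c)) /\
  (* (6) *)
  (2*b^2 >= a^2 -> a^2 >= 2*c^2 ->
     intersect_at (ellipse3 a b c) (ellipse9 a b c) (pts_yz (y4 a b c) (z4 a b c)) /\
     (b^2 >= 2*c^2 ->
        (y2 b c >= y4 a b c /\ z2 b c <= z4 a b c <-> Q6 a b c >= 0))) /\
  (* (7) *)
  (a^2 + c^2 >= 2*b^2 ->
     intersect_at (astroida4 a b c) (ellipse7 a b c) (pts_xy (x5 a b c) (y5 a b c))) /\
  (* (8) *)
  (tangent_curves_at (astroida5 a b c) (ellipse8 a b c) (pts_xz (x6 a b c) (z6 a b c)) /\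
   (* the tangency points divide Astroida 5 into parts lying on different sheets *)
   (let S := caustic_sheet1 a b c in let T := caustic_sheet2 a b c in
    let outer p := Rabs (px p) >= x6 a b c in
    let inner p := Rabs (px p) <= x6 a b c in
    ((forall p, on_curve (astroida5 a b c) p -> outer p -> S p) /\
     (forall p, on_curve (astroida5 a b c) p -> inner p -> T p) \/
     (forall p, on_curve (astroida5 a b c) p -> outer p -> T p) /\
     (forall p, on_curve (astroida5 a b c) p -> inner p -> S p)) /\
    (* and Ellipse 8 into parts lying on different sheets *)
    ((forall p, on_curve (ellipse8 a b c) p -> outer p -> S p) /\
     (forall p, on_curve (ellipse8 a b c) p -> inner p -> T p) \/
     (forall p, on_curve (ellipse8 a b c) p -> outer p -> T p) /\
     (forall p, on_curve (ellipse8 a b c) p -> inner p -> S p))) /\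
   (forall p, pts_xz (x6 a b c) (z6 a b c) p ->
      (1 / a^2 + 1 / c^2 = 3 / b^2 -> on_E a b c p) /\
      (1 / a^2 + 1 / c^2 < 3 / b^2 -> inside_E a b c p) /\
      (1 / a^2 + 1 / c^2 > 3 / b^2 -> outside_E a b c p))) /\
  (* (9) *)
  (a^2 + c^2 <= 2*b^2 ->
     intersect_at (astroida6 a b c) (ellipse9 a b c) (pts_yz (y7 a b c) (z7 a b c)) /\
     (forall p, pts_yz (y7 a b c) (z7 a b c) p ->
        (Q6 a b c = 0 -> on_E a b c p) /\
        (Q6 a b c < 0 -> inside_E a b c p) /\
        (Q6 a b c > 0 -> outside_E a b c p))).
Proof.
  intros.
  split; [intro; apply part1; auto|].
  split; [intro; apply part2; auto|].
  split; [intro; apply part3; auto|].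
  split; [apply part4; auto|].
  split; [intro; apply part5; auto|].
  split; [intros; apply part6; auto|].
  split; [intro; apply part7; auto|].
  split.
  - split; [split; [apply part8i; auto|apply part8t; auto]|].
    split; [apply part8c; auto|apply part8io; auto].
  - intro; split; [apply part9i; auto|apply part9io; auto].
Qed.
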